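(* Let $n,k$ be positive integers with $\gcd(n,k)=1$. (a) Let $N=3n+k$ and suppose $n+k\neq N/2$. Then the geometric realization of $C(n,n,n+k)$ is homeomorphic to a cylinder if $N$ is even and to a Möbius band if $N$ is odd. (b) Let $N=3n+2k$. Then the geometric realization of $C(n,n+k,n+k)$ is homeomorphic to a cylinder if $N$ is even and to a Möbius band if $N$ is odd.
   Context: For positive integers $n_1\le n_2\le n_3$ with $N=n_1+n_2+n_3$, $C(n_1,n_2,n_3)$ denotes the abstract simplicial complex whose vertex set is $\mathbb{Z}/N$, whose 2-simplices are all sets of the form $\{k,k+n_1,k+n_1+n_2\}$ or $\{k,k-n_1,k-n_1-n_2\}$ for $k\in\mathbb{Z}/N$ (the orbit of $\{0,n_1,n_1+n_2\}$ under translations and inversions of $\mathbb{Z}/N$), and whose 1-simplices are all sets $\{k,k+n_i\}$ with $k\in\mathbb{Z}/N$, $i\in\{1,2,3\}$. Cylinder means $S^1\times[0,1]$. *)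

(* Defs.v *)
From Stdlib Require Import Reals Lra Lia Arith.
Open Scope R_scope.

(* Points of R^m are encoded as functions nat -> R vanishing at indices >= m. *)
Definition Rpoint := nat -> R.

Fixpoint sumR (m : nat) (x : Rpoint) : R :=
  match m with O => 0 | S m' => sumR m' x + x m' end.

(* sup-distance on the first m coordinates (induces the Euclidean topology) *)
Fixpoint dist (m : nat) (x y : Rpoint) : R :=
  match m with O => 0 | S m' => Rmax (dist m' x y) (Rabs (x m' - y m')) end.

Definition subspace (m : nat) (A : Rpoint -> Prop) : Prop :=
  forall x, A x -> forall i, (m <= i)%nat -> x i = 0.

Definition cont_on (m p : nat) (A : Rpoint -> Prop) (f : Rpoint -> Rpoint) : Prop :=
  forall x, A x -> forall eps, 0 < eps -> exists delta, 0 < delta /\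
    forall y, A y -> dist m x y < delta -> dist p (f x) (f y) < eps.

Definition homeomorphic (m : nat) (A : Rpoint -> Prop) (p : nat) (B : Rpoint -> Prop) : Prop :=
  exists (f g : Rpoint -> Rpoint),
    (forall x, A x -> B (f x)) /\ (forall y, B y -> A (g y)) /\
    (forall x, A x -> g (f x) = x) /\ (forall y, B y -> f (g y) = y) /\
    cont_on m p A f /\ cont_on p m B g.

(* The vertex set Z/N is {0,...,N-1}, arithmetic mod N.
   A point is in the geometric realization of C(n1,n2,n3) (as a subset of R^N,
   barycentric coordinates) iff its coordinates are nonnegative, sum to 1,
   and its support is contained in a simplex of C(n1,n2,n3). *)
Definition in_simplex (n1 n2 n3 : nat) (S : nat -> Prop) : Prop :=
  let N := (n1 + n2 + n3)%nat in
  exists k, (k < N)%nat /\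
   ( (forall i, S i -> i = k \/ i = ((k + n1) mod N)%nat \/ i = ((k + n1 + n2) mod N)%nat)
  \/ (forall i, S i -> i = k \/ i = ((k + N - n1) mod N)%nat \/ i = ((k + N - n1 - n2) mod N)%nat)
  \/ (forall i, S i -> i = k \/ i = ((k + n1) mod N)%nat)
  \/ (forall i, S i -> i = k \/ i = ((k + n2) mod N)%nat)
  \/ (forall i, S i -> i = k \/ i = ((k + n3) mod N)%nat) ).

Definition realization (n1 n2 n3 : nat) : Rpoint -> Prop :=
  fun x => let N := (n1 + n2 + n3)%nat in
    (forall i, (N <= i)%nat -> x i = 0) /\
    (forall i, 0 <= x i) /\
    sumR N x = 1 /\
    in_simplex n1 n2 n3 (fun i => (i < N)%nat /\ x i <> 0).

Definition cylinder : Rpoint -> Prop :=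
  fun x => (forall i, (3 <= i)%nat -> x i = 0) /\
    (x 0%nat)^2 + (x 1%nat)^2 = 1 /\ 0 <= x 2%nat <= 1.

Definition mobius_band : Rpoint -> Prop :=
  fun x => (forall i, (3 <= i)%nat -> x i = 0) /\
    exists theta s, 0 <= theta <= 2 * PI /\ -(1/2) <= s <= 1/2 /\
      x 0%nat = (1 + s * cos (theta / 2)) * cos theta /\
      x 1%nat = (1 + s * cos (theta / 2)) * sin theta /\
      x 2%nat = s * sin (theta / 2).

(* Main.v *)
Require Import Defs.
From Stdlib Require Import Reals Lra Lia Arith ZArith ClassicalEpsilon FunctionalExtensionality.
Open Scope R_scope.
Local Notation dist := Defs.dist.

Lemma dist_ge0 m x y : 0 <= dist m x y.
Proof. induction m as [|m IHm]. simpl; lra. simpl. apply Rle_trans with (1:=IHm). apply Rmax_l. Qed.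

Lemma dist_coord m x y i : (i < m)%nat -> Rabs (x i - y i) <= dist m x y.
Proof.
  induction m; intros H; [lia|]. simpl.
  destruct (Nat.eq_dec i m) as [->|Hne]; [apply Rmax_r|].
  apply Rle_trans with (2:=Rmax_l _ _). apply IHm; lia.
Qed.

Lemma dist_le m x y d : 0 <= d -> (forall i, (i < m)%nat -> Rabs (x i - y i) <= d) -> dist m x y <= d.
Proof.
  intros Hd; induction m; intros H; simpl; [lra|].
  apply Rmax_lub; [apply IHm; intros; apply H; lia| apply H; lia].
Qed.

Lemma dist_lt m x y d : 0 < d -> (forall i, (i < m)%nat -> Rabs (x i - y i) < d) -> dist m x y < d.
Proof.
  intros Hd; induction m; intros H; simpl; [lra|].
  apply Rmax_lub_lt; [apply IHm; intros; apply H; lia| apply H; lia].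
Qed.

Lemma homeo_trans m A p B q C :
  homeomorphic m A p B -> homeomorphic p B q C -> homeomorphic m A q C.
Proof.
  intros [f1 [g1 [H1 [H2 [H3 [H4 [H5 H6]]]]]]] [f2 [g2 [K1 [K2 [K3 [K4 [K5 K6]]]]]]].
  exists (fun x => f2 (f1 x)), (fun z => g1 (g2 z)).
  repeat split.
  - intros; auto.
  - intros; auto.
  - intros x Hx. rewrite K3 by auto. auto.
  - intros z Hz. rewrite H4 by auto. auto.
  - intros x Hx eps He.
    destruct (K5 (f1 x) (H1 x Hx) eps He) as [d1 [Hd1 Hd1']].
    destruct (H5 x Hx d1 Hd1) as [d2 [Hd2 Hd2']].
    exists d2; split; auto.
  - intros z Hz eps He.
    destruct (H6 (g2 z) (K2 z Hz) eps He) as [d1 [Hd1 Hd1']].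
    destruct (K6 z Hz d1 Hd1) as [d2 [Hd2 Hd2']].
    exists d2; split; auto.
Qed.

Lemma mod_lt N y : (0 < N)%nat -> (y mod N < N)%nat.
Proof. intros; apply Nat.mod_upper_bound; lia. Qed.

Lemma mod2 N y : (0 < N)%nat -> (y < 2*N)%nat ->
  ((y < N)%nat /\ y mod N = y) \/ ((N <= y)%nat /\ y mod N = (y - N)%nat).
Proof.
  intros H0 H. destruct (Nat.lt_ge_cases y N).
  - left; split; auto; apply Nat.mod_small; auto.
  - right; split; auto. replace y with ((y - N) + 1 * N)%nat at 1 by lia.
    rewrite Nat.Div0.mod_add. apply Nat.mod_small; lia.
Qed.

Lemma mod3 N y : (0 < N)%nat -> (y < 3*N)%nat ->
  ((y < N)%nat /\ y mod N = y) \/ ((N <= y < 2*N)%nat /\ y mod N = (y - N)%nat)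
  \/ ((2*N <= y)%nat /\ y mod N = (y - 2*N)%nat).
Proof.
  intros H0 H. destruct (Nat.lt_ge_cases y (2*N)).
  - destruct (mod2 N y H0 H1) as [[? ?]|[? ?]]; [left|right;left]; split; auto; lia.
  - right; right; split; auto. replace y with ((y - 2*N) + 2 * N)%nat at 1 by lia.
    rewrite Nat.Div0.mod_add. apply Nat.mod_small; lia.
Qed.

Lemma mod_addN N y : ((y + N) mod N = y mod N)%nat.
Proof. replace (y + N)%nat with (y + 1 * N)%nat by lia. apply Nat.Div0.mod_add. Qed.

Lemma mod_shift N a r : (0 < r < N)%nat -> (a mod N <> (a + r) mod N)%nat.
Proof.
  intros Hr Heq. rewrite <- Nat.Div0.add_mod_idemp_l in Heq.
  assert (Hm := mod_lt N a ltac:(lia)).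
  destruct (mod2 N (a mod N + r) ltac:(lia) ltac:(lia)) as [[? E]|[? E]]; lia.
Qed.

Lemma mod_mod N a : (0 < N)%nat -> ((a mod N) mod N = a mod N)%nat.
Proof. intros; apply Nat.mod_small, mod_lt; auto. Qed.

Lemma mod_plus_l N a r : ((a mod N + r) mod N = (a + r) mod N)%nat.
Proof. apply Nat.Div0.add_mod_idemp_l. Qed.

Definition Ep (p : nat) : R := if Nat.even p then 0 else 1.

Lemma Ep_01 p : Ep p = 0 \/ Ep p = 1.
Proof. unfold Ep; destruct (Nat.even p); auto. Qed.

Lemma Ep_S p : Ep (S p) = 1 - Ep p.
Proof. unfold Ep. rewrite Nat.even_succ, <- Nat.negb_even. destruct (Nat.even p); simpl; lra. Qed.

Lemma Ep_1 p : Ep (p + 1) = 1 - Ep p.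
Proof. rewrite Nat.add_1_r; apply Ep_S. Qed.
Lemma Ep_2 p : Ep (p + 2) = Ep p.
Proof. replace (p+2)%nat with (S (S p)) by lia. rewrite !Ep_S. lra. Qed.

Definition flip (odd : bool) (h : R) : R := if odd then 1 - h else h.

Lemma Ep_addN N p : Ep (p + N) = flip (Nat.odd N) (Ep p).
Proof.
  induction N.
  - rewrite Nat.add_0_r; reflexivity.
  - replace (p + S N)%nat with (S (p + N)) by lia. rewrite Ep_S, IHN.
    unfold flip. rewrite Nat.odd_succ, <- Nat.negb_odd. destruct (Nat.odd N); simpl; lra.
Qed.

Lemma flip_dist o a b : Rabs (flip o a - flip o b) = Rabs (a - b).
Proof. unfold flip; destruct o; [|reflexivity]. replace (1 - a - (1 - b)) with (-(a-b)) by ring. apply Rabs_Ropp. Qed.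

Lemma flip_inv o a : flip o (flip o a) = a.
Proof. unfold flip; destruct o; lra. Qed.

Definition tent (t w : R) : R := Rmax 0 (Rmin (1 - w) (1 - (Rabs t + w) / 2)).
Definition tentq (u h : R) (q : nat) : R := tent (u - INR q) (Rabs (h - Ep q)).

Lemma tent_ge0 t w : 0 <= tent t w.
Proof. apply Rmax_l. Qed.

Lemma tent_zero t w : 0 <= w -> 2 <= Rabs t + w -> tent t w = 0.
Proof.
  intros. unfold tent. apply Rmax_left. apply Rle_trans with (1 - (Rabs t + w)/2).
  apply Rmin_r. lra.
Qed.

Lemma tent_val t w : 0 <= w <= 1 -> Rabs t + w <= 2 ->
  tent t w = Rmin (1 - w) (1 - (Rabs t + w) / 2).
Proof.
  intros. unfold tent. apply Rmax_right. apply Rmin_glb; lra.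
Qed.

Lemma tent_calc t w A : Rabs t = A -> 0 <= w <= 1 -> A + w <= 2 ->
  tent t w = Rmin (1 - w) (1 - (A + w) / 2).
Proof. intros <- ? ?. apply tent_val; auto. Qed.

Lemma tent_zero' t w A : Rabs t = A -> 0 <= w -> 2 <= A + w -> tent t w = 0.
Proof. intros <- ? ?. apply tent_zero; auto. Qed.

Definition inLT (p : nat) (u h a b c : R) : Prop :=
  0 <= a /\ 0 <= b /\ 0 <= c /\ a + b + c = 1 /\
  u = a * INR p + b * INR (p+1) + c * INR (p+2) /\
  h = a * Ep p + b * Ep (p+1) + c * Ep (p+2).

Definition coef (p q : nat) (a b c : R) : R :=
  if Nat.eqb q p then a else if Nat.eqb q (p+1) then b else if Nat.eqb q (p+2) then c else 0.

Lemma Rabs_of x y : (x = y \/ x = - y) -> 0 <= y -> Rabs x = y.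
Proof. intros [->| ->] H. apply Rabs_pos_eq; auto. rewrite Rabs_Ropp; apply Rabs_pos_eq; auto. Qed.

Lemma tent_eval p u h a b c q : inLT p u h a b c -> tentq u h q = coef p q a b c.
Proof.
  intros (Ha & Hb & Hc & Hs & Hu & Hh). unfold tentq, coef.
  rewrite !plus_INR in Hu. simpl INR in Hu. rewrite Ep_1, Ep_2 in Hh.
  set (P := INR p) in *.
  assert (Hu' : u = P + b + 2 * c) by (rewrite Hu; replace a with (1 - b - c) by lra; ring).
  clear Hu.
  assert (HP := Ep_01 p).
  destruct (Nat.eqb_spec q p) as [->|Hq1]; [|destruct (Nat.eqb_spec q (p+1)) as [->|Hq2];
   [|destruct (Nat.eqb_spec q (p+2)) as [->|Hq3]]].
  - change (INR p) with P.
    assert (Rabs (h - Ep p) = b) by (apply Rabs_of; [destruct HP as [E|E]; rewrite E in *; [left|right]; lra|lra]).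
    rewrite H. rewrite (tent_calc _ _ (b + 2*c)) by (try (apply Rabs_of; [left; lra|]); lra).
    rewrite Rmin_right; lra.
  - rewrite Ep_1, plus_INR; simpl INR. change (INR p) with P.
    assert (Rabs (h - (1 - Ep p)) = a + c) by (apply Rabs_of; [destruct HP as [E|E]; rewrite E in *; [right|left]; lra|lra]).
    rewrite H.
    destruct (Rle_lt_dec 0 (u - (P+1))).
    + rewrite (tent_calc _ _ (u - (P+1))) by (try (apply Rabs_of; [left; lra|]); lra).
      rewrite Rmin_left; lra.
    + rewrite (tent_calc _ _ (-(u - (P+1)))) by (try (apply Rabs_of; [right; lra|]); lra).
      rewrite Rmin_left; lra.
  - rewrite Ep_2, plus_INR; simpl INR. change (INR p) with P.
    assert (Rabs (h - Ep p) = b) by (apply Rabs_of; [destruct HP as [E|E]; rewrite E in *; [left|right]; lra|lra]).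
    rewrite H. rewrite (tent_calc _ _ (2*a + b)) by (try (apply Rabs_of; [right; lra|]); lra).
    rewrite Rmin_right; lra.
  - destruct (Nat.lt_ge_cases q p) as [Hlt|Hge].
    + destruct (Nat.eq_dec (q + 1) p) as [Hq|Hq].
      * subst p. unfold P in *; rewrite plus_INR in *; simpl INR in *.
        assert (Ep (q+1) = 1 - Ep q) by apply Ep_1. rewrite H in Hh.
        assert (Rabs (h - Ep q) = 1 - b) by (apply Rabs_of; [destruct (Ep_01 q) as [E|E]; rewrite E in *; [left|right]; lra|lra]).
        rewrite H0. apply (tent_zero' _ _ (1 + b + 2*c)); [apply Rabs_of; [left|]| |]; lra.
      * assert (INR q + 2 <= P) by (unfold P; replace p with ((q + 2) + (p - q - 2))%nat by lia;
          rewrite !plus_INR; simpl INR; pose proof (pos_INR (p - q - 2)); lra).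
        assert (0 <= Rabs (h - Ep q)) by apply Rabs_pos.
        apply (tent_zero' _ _ (u - INR q)); [apply Rabs_of; [left|]| |]; lra.
    + destruct (Nat.eq_dec q (p + 3)) as [Hq|Hq].
      * subst q. rewrite plus_INR; simpl INR. change (INR p) with P.
        replace (Ep (p+3)) with (1 - Ep p) by (replace (p+3)%nat with (S (p+2)) by lia; rewrite Ep_S, Ep_2; lra).
        assert (Rabs (h - (1 - Ep p)) = 1 - b) by (apply Rabs_of; [destruct HP as [E|E]; rewrite E in *; [right|left]; lra|lra]).
        rewrite H. apply (tent_zero' _ _ (3 - b - 2*c)); [apply Rabs_of; [right|]| |]; lra.
      * assert (P + 4 <= INR q) by (unfold P; replace q with ((p + 4) + (q - p - 4))%nat by lia;
          rewrite !plus_INR; simpl INR; pose proof (pos_INR (q - p - 4)); lra).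
        assert (0 <= Rabs (h - Ep q)) by apply Rabs_pos.
        apply (tent_zero' _ _ (INR q - u)); [apply Rabs_of; [right|]| |]; lra.
Qed.
Definition Hvec (N : nat) (u h : R) : Rpoint :=
  fun j => if (j <? N)%nat then tentq u h j + tentq u h (j + N) + tentq u h (j + 2 * N) else 0.

Definition coefm (N p j : nat) (a b c : R) : R :=
  if Nat.eqb j (p mod N) then a else if Nat.eqb j ((p+1) mod N) then b
  else if Nat.eqb j ((p+2) mod N) then c else 0.

Lemma Hvec_eval N p u h a b c j : (3 <= N)%nat -> (p < 2 * N)%nat -> (j < N)%nat ->
  inLT p u h a b c -> Hvec N u h j = coefm N p j a b c.
Proof.
  intros HN Hp Hj HL. unfold Hvec. destruct (Nat.ltb_spec j N); [|lia].
  rewrite !(tent_eval p u h a b c) by auto.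
  unfold coefm, coef.
  destruct (mod2 N p ltac:(lia) ltac:(lia)) as [[H1 ->]|[H1 ->]];
  (destruct (mod3 N (p+1) ltac:(lia) ltac:(lia)) as [[H2 ->]|[[H2 ->]|[H2 ->]]];
  [|idtac|idtac]);
  (destruct (mod3 N (p+2) ltac:(lia) ltac:(lia)) as [[H3 ->]|[[H3 ->]|[H3 ->]]]);
  try (exfalso; lia);
  repeat match goal with |- context [Nat.eqb ?x ?y] => destruct (Nat.eqb_spec x y); try (exfalso; lia) end; lra.
Qed.

Lemma Hvec_out N u h j : (N <= j)%nat -> Hvec N u h j = 0.
Proof. intros; unfold Hvec; destruct (Nat.ltb_spec j N); [lia|auto]. Qed.

Lemma INR_addN j N : INR (j + N) = INR j + INR N.
Proof. apply plus_INR. Qed.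

Lemma tentq_deck N u h q : tentq (u + INR N) (flip (Nat.odd N) h) (q + N) = tentq u h q.
Proof.
  unfold tentq. rewrite plus_INR, Ep_addN. rewrite flip_dist.
  f_equal. ring.
Qed.

Lemma Hvec_deck N u h : (3 <= N)%nat -> 1 <= u <= INR N + 1 ->
  Hvec N (u + INR N) (flip (Nat.odd N) h) = Hvec N u h.
Proof.
  intros HN Hu. apply functional_extensionality; intro j. unfold Hvec.
  destruct (Nat.ltb_spec j N); [|auto].
  replace (j + 2 * N)%nat with ((j + N) + N)%nat by lia.
  rewrite !tentq_deck.
  assert (HjN : INR j + 1 <= INR N) by (rewrite <- S_INR; apply le_INR; lia).
  assert (H3 : 3 <= INR N) by (replace 3 with (INR 3) by (simpl; lra); apply le_INR; lia).
  assert (Hj0 := pos_INR j).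
  assert (E1 : tentq (u + INR N) (flip (Nat.odd N) h) j = 0).
  { unfold tentq. apply (tent_zero' _ _ (u + INR N - INR j)); [apply Rabs_of; [left|]| |]; try lra.
    apply Rabs_pos. pose proof (Rabs_pos (flip (Nat.odd N) h - Ep j)); lra. }
  assert (E2 : tentq u h ((j + N) + N) = 0).
  { unfold tentq. rewrite !plus_INR. apply (tent_zero' _ _ (INR j + INR N + INR N - u)); [apply Rabs_of; [right|]| |]; try lra.
    apply Rabs_pos. pose proof (Rabs_pos (h - Ep (j + N + N))); lra. }
  rewrite E1, E2. ring.
Qed.

Lemma Rmax0_lip a b : Rabs (Rmax 0 a - Rmax 0 b) <= Rabs (a - b).
Proof. unfold Rmax; repeat destruct Rle_dec; unfold Rabs; repeat destruct Rcase_abs; lra. Qed.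

Lemma Rmin_lip a b a' b' : Rabs (Rmin a b - Rmin a' b') <= Rmax (Rabs (a - a')) (Rabs (b - b')).
Proof.
  unfold Rmin; repeat destruct Rle_dec; unfold Rmax; repeat destruct Rle_dec;
  unfold Rabs in *; repeat destruct Rcase_abs; lra.
Qed.

Lemma tent_lip t w t' w' : Rabs (tent t w - tent t' w') <= Rabs (t - t') + Rabs (w - w').
Proof.
  unfold tent. eapply Rle_trans; [apply Rmax0_lip|].
  eapply Rle_trans; [apply Rmin_lip|].
  pose proof (Rabs_triang_inv t t'). pose proof (Rabs_triang_inv t' t).
  pose proof (Rabs_pos (t - t')). pose proof (Rabs_pos (w - w')).
  rewrite (Rabs_minus_sym t' t) in H0.
  apply Rmax_lub.
  - replace (1 - w - (1 - w')) with (-(w - w')) by ring. rewrite Rabs_Ropp. lra.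
  - replace (1 - (Rabs t + w)/2 - (1 - (Rabs t' + w')/2)) with (-((Rabs t - Rabs t') + (w - w'))/2) by field.
    unfold Rdiv. rewrite Rabs_mult, Rabs_Ropp. rewrite (Rabs_pos_eq (/2)) by lra.
    pose proof (Rabs_triang (Rabs t - Rabs t') (w - w')).
    assert (Rabs (Rabs t - Rabs t') <= Rabs (t - t')) by (unfold Rabs at 1; destruct Rcase_abs; lra).
    lra.
Qed.

Lemma tentq_lip u h u' h' q : Rabs (tentq u h q - tentq u' h' q) <= Rabs (u - u') + Rabs (h - h').
Proof.
  unfold tentq. eapply Rle_trans; [apply tent_lip|].
  replace (u - INR q - (u' - INR q)) with (u - u') by ring.
  pose proof (Rabs_triang_inv (h - Ep q) (h' - Ep q)).
  pose proof (Rabs_triang_inv (h' - Ep q) (h - Ep q)).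
  replace (h - Ep q - (h' - Ep q)) with (h - h') in H by ring.
  replace (h' - Ep q - (h - Ep q)) with (-(h - h')) in H0 by ring. rewrite Rabs_Ropp in H0.
  assert (Rabs (Rabs (h - Ep q) - Rabs (h' - Ep q)) <= Rabs (h - h')) by (unfold Rabs at 1; destruct Rcase_abs; lra).
  lra.
Qed.

Lemma Hvec_lip N u h u' h' j : Rabs (Hvec N u h j - Hvec N u' h' j) <= 3 * (Rabs (u - u') + Rabs (h - h')).
Proof.
  unfold Hvec. destruct (j <? N)%nat.
  - pose proof (tentq_lip u h u' h' j). pose proof (tentq_lip u h u' h' (j + N)).
    pose proof (tentq_lip u h u' h' (j + 2 * N)).
    set (d1 := tentq u h j - tentq u' h' j) in *. set (d2 := tentq u h (j+N) - tentq u' h' (j+N)) in *.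
    set (d3 := tentq u h (j+2*N) - tentq u' h' (j+2*N)) in *.
    replace (tentq u h j + tentq u h (j + N) + tentq u h (j + 2 * N) -
      (tentq u' h' j + tentq u' h' (j + N) + tentq u' h' (j + 2 * N))) with ((d1 + d2) + d3) by (unfold d1, d2, d3; ring).
    pose proof (Rabs_triang (d1 + d2) d3). pose proof (Rabs_triang d1 d2). lra.
  - rewrite Rminus_0_r, Rabs_R0. pose proof (Rabs_pos (u - u')). pose proof (Rabs_pos (h - h')). lra.
Qed.

Lemma locator N u h : 1 <= u <= INR N + 1 -> 0 <= h <= 1 ->
  exists p a b c, (p <= N)%nat /\ inLT p u h a b c.
Proof.
  intros Hu Hh.
  destruct (archimed u) as [A1 A2].
  set (z := (up u - 1)%Z).
  assert (Hz1 : (1 <= z)%Z).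
  { assert (IZR (up u) > 1) by lra. apply lt_IZR in H. unfold z; lia. }
  set (q := Z.to_nat z).
  assert (Hq : INR q = IZR z) by (unfold q; rewrite INR_IZR_INZ, Z2Nat.id by lia; reflexivity).
  assert (Hzz : IZR z = IZR (up u) - 1) by (unfold z; rewrite minus_IZR; reflexivity).
  assert (Hq1 : (1 <= q)%nat) by (unfold q; lia).
  set (f := u - INR q). assert (Hf : 0 <= f < 1) by (unfold f; lra). assert (Hfd : f = u - INR q) by reflexivity.
  set (w := Rabs (h - Ep q)).
  assert (Hw : w = (if Nat.even q then h else 1 - h)).
  { unfold w, Ep. destruct (Nat.even q); [rewrite Rminus_0_r; apply Rabs_pos_eq; lra|].
    rewrite Rabs_minus_sym. apply Rabs_pos_eq; lra. }
  assert (Hw01 : 0 <= w <= 1) by (rewrite Hw; destruct (Nat.even q); lra).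
  assert (HE : Ep q = (if Nat.even q then 0 else 1)) by reflexivity.
  destruct (Rle_lt_dec f w).
  - exists (q - 1)%nat, ((w - f)/2), (1 - w), ((f + w)/2).
    assert (HqN : (q <= N + 1)%nat).
    { apply INR_le. rewrite plus_INR; simpl INR. lra. }
    split; [lia|]. unfold inLT.
    replace (q - 1 + 1)%nat with q by lia. replace (q - 1 + 2)%nat with (q + 1)%nat by lia.
    assert (Hqm : INR (q - 1) = INR q - 1) by (rewrite minus_INR by lia; simpl; ring).
    assert (Eqm : Ep (q - 1) = 1 - Ep q) by (assert (Ep q = 1 - Ep (q-1)) by (replace q with (S (q-1)) at 1 by lia; apply Ep_S); lra).
    rewrite Ep_1, Eqm, plus_INR, Hqm. simpl INR.
    repeat split; try lra.
    all: try (rewrite Hfd; field); try (rewrite HE, Hw; destruct (Nat.even q); field).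
  - exists q, (1 - (f + w)/2), w, ((f - w)/2).
    assert (HqN : (q <= N)%nat).
    { assert (INR q < INR N + 1) by lra. assert (INR q < INR (N + 1)) by (rewrite plus_INR; simpl; lra).
      apply INR_lt in H0. lia. }
    split; [auto|]. unfold inLT.
    rewrite Ep_1, Ep_2, !plus_INR. simpl INR.
    repeat split; try lra.
    all: try (rewrite Hfd; field); try (rewrite HE, Hw; destruct (Nat.even q); field).
Qed.
Definition inTri (N L : nat) (x : Rpoint) : Prop :=
  forall j, (j < N)%nat -> x j <> 0 -> j = L mod N \/ j = (L+1) mod N \/ j = (L+2) mod N.

Definition Zig (N : nat) (x : Rpoint) : Prop :=
  (forall i, (N <= i)%nat -> x i = 0) /\ (forall i, 0 <= x i) /\ sumR N x = 1 /\
  exists i, (i < N)%nat /\ inTri N i x.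

Lemma sumR_sparse_gen N x a b c : (a <> b)%nat -> (a <> c)%nat -> (b <> c)%nat ->
  (forall j, (j < N)%nat -> x j <> 0 -> j = a \/ j = b \/ j = c) ->
  forall m, (m <= N)%nat -> sumR m x =
    (if (a <? m)%nat then x a else 0) + (if (b <? m)%nat then x b else 0) + (if (c <? m)%nat then x c else 0).
Proof.
  intros Hab Hac Hbc Hx m. induction m; intros Hm.
  - simpl. lra.
  - simpl sumR. rewrite IHm by lia.
    destruct (Nat.eq_dec m a) as [->|Ha]; [|destruct (Nat.eq_dec m b) as [->|Hb];
      [|destruct (Nat.eq_dec m c) as [->|Hc]]].
    + repeat match goal with |- context [Nat.ltb ?x ?y] => destruct (Nat.ltb_spec x y); try (exfalso; lia) end; lra.
    + repeat match goal with |- context [Nat.ltb ?x ?y] => destruct (Nat.ltb_spec x y); try (exfalso; lia) end; lra.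
    + repeat match goal with |- context [Nat.ltb ?x ?y] => destruct (Nat.ltb_spec x y); try (exfalso; lia) end; lra.
    + assert (x m = 0).
      { destruct (Req_EM_T (x m) 0) as [E|E]; auto. destruct (Hx m ltac:(lia) E) as [?|[?|?]]; lia. }
      rewrite H.
      repeat match goal with |- context [Nat.ltb ?x ?y] => destruct (Nat.ltb_spec x y); try (exfalso; lia) end; lra.
Qed.

Lemma sumR_sparse N x a b c : (a < N)%nat -> (b < N)%nat -> (c < N)%nat ->
  (a <> b)%nat -> (a <> c)%nat -> (b <> c)%nat ->
  (forall j, (j < N)%nat -> x j <> 0 -> j = a \/ j = b \/ j = c) ->
  sumR N x = x a + x b + x c.
Proof.
  intros. rewrite (sumR_sparse_gen N x a b c) by auto.
  repeat match goal with |- context [Nat.ltb ?x ?y] => destruct (Nat.ltb_spec x y); try (exfalso; lia) end; lra.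
Qed.

Lemma tri_distinct N L : (3 <= N)%nat ->
  (L mod N <> (L+1) mod N)%nat /\ (L mod N <> (L+2) mod N)%nat /\ ((L+1) mod N <> (L+2) mod N)%nat.
Proof.
  intros HN. split; [apply mod_shift; lia|]. split; [apply mod_shift; lia|].
  replace (L+2)%nat with ((L+1)+1)%nat by lia. apply mod_shift; lia.
Qed.

Lemma tri_sum N L x : (3 <= N)%nat -> sumR N x = 1 -> inTri N L x ->
  x (L mod N) + x ((L+1) mod N) + x ((L+2) mod N) = 1.
Proof.
  intros HN Hs HT. destruct (tri_distinct N L HN) as [D1 [D2 D3]].
  rewrite <- Hs. symmetry. apply sumR_sparse; auto; apply mod_lt; lia.
Qed.

Definition Ul (N L : nat) (x : Rpoint) : R :=
  x (L mod N) * INR L + x ((L+1) mod N) * INR (L+1) + x ((L+2) mod N) * INR (L+2).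
Definition Hl (N L : nat) (x : Rpoint) : R :=
  x (L mod N) * Ep L + x ((L+1) mod N) * Ep (L+1) + x ((L+2) mod N) * Ep (L+2).

Lemma inLT_of N L x : (forall i, 0 <= x i) ->
  x (L mod N) + x ((L+1) mod N) + x ((L+2) mod N) = 1 ->
  inLT L (Ul N L x) (Hl N L x) (x (L mod N)) (x ((L+1) mod N)) (x ((L+2) mod N)).
Proof. intros Hp Hs. unfold inLT, Ul, Hl. repeat split; auto. Qed.

Lemma inLT_u p u h a b c : inLT p u h a b c -> INR p <= u <= INR p + 2.
Proof.
  intros (Ha & Hb & Hc & Hs & Hu & Hh). rewrite !plus_INR in Hu. simpl INR in Hu.
  assert (u = INR p + b + 2 * c) by (rewrite Hu; replace a with (1 - b - c) by lra; ring). lra.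
Qed.

Lemma inLT_h p u h a b c : inLT p u h a b c -> 0 <= h <= 1.
Proof.
  intros (Ha & Hb & Hc & Hs & Hu & Hh). rewrite Ep_1, Ep_2 in Hh.
  destruct (Ep_01 p) as [E|E]; rewrite E in Hh; nra.
Qed.

Lemma inLT_deck N p u h a b c : inLT p u h a b c ->
  inLT (p + N) (u + INR N) (flip (Nat.odd N) h) a b c.
Proof.
  intros (Ha & Hb & Hc & Hs & Hu & Hh). unfold inLT.
  replace (p + N + 1)%nat with ((p + 1) + N)%nat by lia.
  replace (p + N + 2)%nat with ((p + 2) + N)%nat by lia.
  rewrite !(Ep_addN N), !(plus_INR _ N). repeat split; auto.
  - rewrite Hu. replace a with (1 - b - c) by lra. ring.
  - rewrite Hh. unfold flip. destruct (Nat.odd N); [|auto].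
    replace a with (1 - b - c) by lra. ring.
Qed.

Lemma mod_addN' N L r : ((L + N + r) mod N = (L + r) mod N)%nat.
Proof. replace (L + N + r)%nat with ((L + r) + N)%nat by lia. apply mod_addN. Qed.

Lemma inTri_addN N L x : inTri N (L + N) x <-> inTri N L x.
Proof.
  unfold inTri. rewrite !mod_addN', mod_addN. tauto.
Qed.

Lemma Ul_deck N L x : x (L mod N) + x ((L+1) mod N) + x ((L+2) mod N) = 1 ->
  Ul N (L + N) x = Ul N L x + INR N /\ Hl N (L + N) x = flip (Nat.odd N) (Hl N L x).
Proof.
  intros Hs. unfold Ul, Hl. rewrite !mod_addN', mod_addN.
  replace (L + N + 1)%nat with ((L + 1) + N)%nat by lia.
  replace (L + N + 2)%nat with ((L + 2) + N)%nat by lia.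
  rewrite !(Ep_addN N), !(plus_INR _ N). split.
  - replace (x (L mod N)) with (1 - x ((L+1) mod N) - x ((L+2) mod N)) by lra. ring.
  - unfold flip. destruct (Nat.odd N); [|auto].
    replace (x (L mod N)) with (1 - x ((L+1) mod N) - x ((L+2) mod N)) by lra. ring.
Qed.

Lemma notin N L x j : (0 < N)%nat -> inTri N L x ->
  (j mod N <> L mod N)%nat -> (j mod N <> (L+1) mod N)%nat -> (j mod N <> (L+2) mod N)%nat ->
  x (j mod N) = 0.
Proof.
  intros HN HT H1 H2 H3. destruct (Req_EM_T (x (j mod N)) 0) as [E|E]; auto.
  destruct (HT (j mod N) (mod_lt N j HN) E) as [?|[?|?]]; contradiction.
Qed.

Lemma adj1 N L x : (5 <= N)%nat -> inTri N L x -> inTri N (L+1) x ->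
  Ul N L x = Ul N (L+1) x /\ Hl N L x = Hl N (L+1) x.
Proof.
  intros HN H1 H2.
  assert (Z1 : x (L mod N) = 0).
  { apply (notin N (L+1)); auto; try lia.
    - apply mod_shift; lia.
    - replace (L+1+1)%nat with (L+2)%nat by lia. apply mod_shift; lia.
    - replace (L+1+2)%nat with (L+3)%nat by lia. apply mod_shift; lia. }
  assert (Z3 : x ((L+3) mod N) = 0).
  { apply (notin N L); auto; try lia.
    - intro E; symmetry in E; revert E; apply mod_shift; lia.
    - replace (L+3)%nat with ((L+1)+2)%nat by lia. intro E; symmetry in E; revert E; apply mod_shift; lia.
    - replace (L+3)%nat with ((L+2)+1)%nat by lia. intro E; symmetry in E; revert E; apply mod_shift; lia. }
  unfold Ul, Hl. replace (L+1+1)%nat with (L+2)%nat by lia. replace (L+1+2)%nat with (L+3)%nat by lia.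
  rewrite Z1, Z3. split; ring.
Qed.

Lemma adj2 N L x : (5 <= N)%nat -> inTri N L x -> inTri N (L+2) x ->
  Ul N L x = Ul N (L+2) x /\ Hl N L x = Hl N (L+2) x.
Proof.
  intros HN H1 H2.
  assert (Z0 : x (L mod N) = 0).
  { apply (notin N (L+2)); auto; try lia.
    - apply mod_shift; lia.
    - replace (L+2+1)%nat with (L+3)%nat by lia. apply mod_shift; lia.
    - replace (L+2+2)%nat with (L+4)%nat by lia. apply mod_shift; lia. }
  assert (Z1 : x ((L+1) mod N) = 0).
  { apply (notin N (L+2)); auto; try lia.
    - replace (L+2)%nat with ((L+1)+1)%nat by lia. apply mod_shift; lia.
    - replace (L+2+1)%nat with ((L+1)+2)%nat by lia. apply mod_shift; lia.
    - replace (L+2+2)%nat with ((L+1)+3)%nat by lia. apply mod_shift; lia. }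
  assert (Z3 : x ((L+3) mod N) = 0).
  { apply (notin N L); auto; try lia.
    - intro E; symmetry in E; revert E; apply mod_shift; lia.
    - replace (L+3)%nat with ((L+1)+2)%nat by lia. intro E; symmetry in E; revert E; apply mod_shift; lia.
    - replace (L+3)%nat with ((L+2)+1)%nat by lia. intro E; symmetry in E; revert E; apply mod_shift; lia. }
  assert (Z4 : x ((L+4) mod N) = 0).
  { apply (notin N L); auto; try lia.
    - intro E; symmetry in E; revert E; apply mod_shift; lia.
    - replace (L+4)%nat with ((L+1)+3)%nat by lia. intro E; symmetry in E; revert E; apply mod_shift; lia.
    - replace (L+4)%nat with ((L+2)+2)%nat by lia. intro E; symmetry in E; revert E; apply mod_shift; lia. }
  unfold Ul, Hl. replace (L+2+1)%nat with (L+3)%nat by lia. replace (L+2+2)%nat with (L+4)%nat by lia.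
  rewrite Z0, Z1, Z3, Z4. split; ring.
Qed.
Lemma sumR_zero N x : (forall j, (j < N)%nat -> x j = 0) -> forall m, (m <= N)%nat -> sumR m x = 0.
Proof. intros H m; induction m; intros Hm; simpl; [lra|]. rewrite IHm, H by lia. lra. Qed.

Lemma exists_nonzero N x : sumR N x = 1 -> exists j, (j < N)%nat /\ x j <> 0.
Proof.
  intros Hs. destruct (Classical_Prop.classic (exists j, (j<N)%nat /\ x j <> 0)) as [H|H]; auto.
  exfalso. assert (sumR N x = 0).
  { apply (sumR_zero N); auto. intros j Hj. destruct (Req_EM_T (x j) 0); auto. exfalso; apply H; eauto. }
  lra.
Qed.

Definition deckP N (P : R -> R -> Rpoint) := forall u h, P (u + INR N) (flip (Nat.odd N) h) = P u h.

Lemma Wstep N (P : R -> R -> Rpoint) x L L' : (5 <= N)%nat -> Zig N x -> inTri N L x -> inTri N L' x ->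
  (L' = L + 1 \/ L' = L + 2)%nat -> P (Ul N L x) (Hl N L x) = P (Ul N L' x) (Hl N L' x).
Proof.
  intros HN HZ H1 H2 [->| ->].
  - destruct (adj1 N L x HN H1 H2) as [-> ->]; auto.
  - destruct (adj2 N L x HN H1 H2) as [-> ->]; auto.
Qed.

Lemma Wdeck N (P : R -> R -> Rpoint) x L : (3 <= N)%nat -> deckP N P -> Zig N x -> inTri N L x ->
  P (Ul N (L + N) x) (Hl N (L + N) x) = P (Ul N L x) (Hl N L x).
Proof.
  intros HN HD HZ HT. destruct HZ as (_ & _ & Hs & _).
  destruct (Ul_deck N L x (tri_sum N L x HN Hs HT)) as [-> ->]. apply HD.
Qed.

Lemma Wdef N (P : R -> R -> Rpoint) x i i' : (5 <= N)%nat -> deckP N P -> Zig N x -> (i < N)%nat -> (i' < N)%nat ->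
  inTri N i x -> inTri N i' x -> P (Ul N i x) (Hl N i x) = P (Ul N i' x) (Hl N i' x).
Proof.
  intros HN HD HZ Hi Hi' T1 T2.
  assert (HZ' := HZ). destruct HZ' as (Hv & Hp & Hs & _).
  destruct (exists_nonzero N x Hs) as [j0 [Hj0 Hx0]].
  assert (Rel : (i' = i \/ i' = i+1 \/ i' = i+2 \/ i = i'+1 \/ i = i'+2 \/
     i'+N = i+1 \/ i'+N = i+2 \/ i+N = i'+1 \/ i+N = i'+2)%nat).
  { destruct (T1 j0 Hj0 Hx0) as [E1|[E1|E1]]; destruct (T2 j0 Hj0 Hx0) as [E2|[E2|E2]];
    rewrite ?(Nat.mod_small i N Hi), ?(Nat.mod_small i' N Hi') in *;
    try (destruct (mod2 N (i+1) ltac:(lia) ltac:(lia)) as [[? E3]|[? E3]]; rewrite E3 in *);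
    try (destruct (mod2 N (i+2) ltac:(lia) ltac:(lia)) as [[? E3]|[? E3]]; rewrite E3 in *);
    try (destruct (mod2 N (i'+1) ltac:(lia) ltac:(lia)) as [[? E4]|[? E4]]; rewrite E4 in *);
    try (destruct (mod2 N (i'+2) ltac:(lia) ltac:(lia)) as [[? E4]|[? E4]]; rewrite E4 in *);
    lia. }
  assert (TN : forall L, inTri N L x -> inTri N (L + N) x) by (intros; apply inTri_addN; auto).
  destruct Rel as [->|[E|[E|[E|[E|[E|[E|[E|E]]]]]]]].
  - reflexivity.
  - apply Wstep; auto; lia.
  - apply Wstep; auto; lia.
  - symmetry; apply Wstep; auto; lia.
  - symmetry; apply Wstep; auto; lia.
  - rewrite <- (Wdeck N P x i') by (auto; lia). apply Wstep; auto; lia.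
  - rewrite <- (Wdeck N P x i') by (auto; lia). apply Wstep; auto; lia.
  - rewrite <- (Wdeck N P x i) by (auto; lia). symmetry; apply Wstep; auto; lia.
  - rewrite <- (Wdeck N P x i) by (auto; lia). symmetry; apply Wstep; auto; lia.
Qed.
Definition ich (N : nat) (x : Rpoint) : nat :=
  epsilon (inhabits 0%nat) (fun i => (i < N)%nat /\ inTri N i x).

Lemma ich_spec N x : Zig N x -> (ich N x < N)%nat /\ inTri N (ich N x) x.
Proof. intros (_ & _ & _ & H). unfold ich. apply (epsilon_spec (inhabits 0%nat) (fun i => (i < N)%nat /\ inTri N i x) H). Qed.

Definition fZ (N : nat) (P : R -> R -> Rpoint) (x : Rpoint) : Rpoint :=
  P (Ul N (ich N x) x) (Hl N (ich N x) x).

Definition prm (N : nat) (P : R -> R -> Rpoint) (y : Rpoint) : R * R :=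
  epsilon (inhabits (0,0)) (fun uh => 1 < fst uh <= INR N + 1 /\ 0 <= snd uh <= 1 /\ y = P (fst uh) (snd uh)).

Lemma prm_spec N P y : (exists u h, 1 < u <= INR N + 1 /\ 0 <= h <= 1 /\ y = P u h) ->
  1 < fst (prm N P y) <= INR N + 1 /\ 0 <= snd (prm N P y) <= 1 /\ y = P (fst (prm N P y)) (snd (prm N P y)).
Proof.
  intros [u [h H]]. unfold prm.
  apply (epsilon_spec (inhabits (0,0)) (fun uh => 1 < fst uh <= INR N + 1 /\ 0 <= snd uh <= 1 /\ y = P (fst uh) (snd uh))).
  exists (u, h). simpl. auto.
Qed.

Definition gZ (N : nat) (P : R -> R -> Rpoint) (y : Rpoint) : Rpoint :=
  Hvec N (fst (prm N P y)) (snd (prm N P y)).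

Lemma coefm_at N p a b c : (3 <= N)%nat ->
  coefm N p (p mod N) a b c = a /\ coefm N p ((p+1) mod N) a b c = b /\ coefm N p ((p+2) mod N) a b c = c.
Proof.
  intros HN. destruct (tri_distinct N p HN) as [D1 [D2 D3]]. unfold coefm.
  repeat match goal with |- context [Nat.eqb ?x ?y] => destruct (Nat.eqb_spec x y); try (exfalso; congruence) end;
  auto.
Qed.

Lemma coefm_nz N p j a b c : coefm N p j a b c <> 0 -> j = p mod N \/ j = (p+1) mod N \/ j = (p+2) mod N.
Proof.
  unfold coefm. repeat match goal with |- context [Nat.eqb ?x ?y] => destruct (Nat.eqb_spec x y) end; auto.
  intros H; exfalso; apply H; reflexivity.
Qed.

Lemma coefm_addN N p j a b c : coefm N (p + N) j a b c = coefm N p j a b c.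
Proof. unfold coefm. rewrite !mod_addN', mod_addN. reflexivity. Qed.

Lemma Hvec_zig N p u h a b c : (3 <= N)%nat -> (p < 2 * N)%nat -> inLT p u h a b c ->
  Zig N (Hvec N u h).
Proof.
  intros HN Hp HL. assert (HL' := HL). destruct HL' as (Ha & Hb & Hc & Hs & _).
  assert (Ev : forall j, (j < N)%nat -> Hvec N u h j = coefm N p j a b c) by (intros; apply Hvec_eval; auto).
  destruct (coefm_at N p a b c HN) as [C1 [C2 C3]].
  destruct (tri_distinct N p HN) as [D1 [D2 D3]].
  assert (M0 := mod_lt N p ltac:(lia)). assert (M1 := mod_lt N (p+1) ltac:(lia)). assert (M2 := mod_lt N (p+2) ltac:(lia)).
  split; [|split; [|split]].
  - apply Hvec_out.
  - intros i. unfold Hvec. destruct (i <? N)%nat; [|lra].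
    pose proof (tent_ge0 (u - INR i) (Rabs (h - Ep i))).
    pose proof (tent_ge0 (u - INR (i+N)) (Rabs (h - Ep (i+N)))).
    pose proof (tent_ge0 (u - INR (i+2*N)) (Rabs (h - Ep (i+2*N)))).
    unfold tentq. lra.
  - rewrite (sumR_sparse N _ (p mod N) ((p+1) mod N) ((p+2) mod N)); auto.
    + rewrite !Ev by auto. rewrite C1, C2, C3. lra.
    + intros j Hj Hnz. rewrite Ev in Hnz by auto. apply coefm_nz in Hnz. auto.
  - exists (p mod N). split; auto. intros j Hj Hnz. rewrite Ev in Hnz by auto. apply coefm_nz in Hnz.
    rewrite mod_mod, !mod_plus_l by lia. auto.
Qed.

Lemma Hvec_vals N p u h a b c : (3 <= N)%nat -> (p < 2 * N)%nat -> inLT p u h a b c ->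
  Hvec N u h (p mod N) = a /\ Hvec N u h ((p+1) mod N) = b /\ Hvec N u h ((p+2) mod N) = c.
Proof.
  intros HN Hp HL. destruct (coefm_at N p a b c HN) as [C1 [C2 C3]].
  rewrite !(Hvec_eval N p u h a b c) by (auto; apply mod_lt; lia). auto.
Qed.

Lemma Ul_lip N L x y : (0 < N)%nat -> (L < N)%nat ->
  Rabs (Ul N L x - Ul N L y) <= 3 * (INR N + 2) * dist N x y.
Proof.
  intros HN HL. unfold Ul.
  assert (B1 := dist_coord N x y (L mod N) (mod_lt N L HN)).
  assert (B2 := dist_coord N x y ((L+1) mod N) (mod_lt N (L+1) HN)).
  assert (B3 := dist_coord N x y ((L+2) mod N) (mod_lt N (L+2) HN)).
  assert (I0 : INR L <= INR N) by (apply le_INR; lia).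
  assert (I1 : INR L <= INR N + 2) by lra.
  assert (I2 : INR (L+1) <= INR N + 2) by (rewrite plus_INR; simpl INR; lra).
  assert (I3 : INR (L+2) <= INR N + 2) by (rewrite plus_INR; simpl INR; lra).
  pose proof (pos_INR L). pose proof (pos_INR (L+1)). pose proof (pos_INR (L+2)).
  pose proof (dist_ge0 N x y).
  set (d1 := x (L mod N) - y (L mod N)) in *. set (d2 := x ((L+1) mod N) - y ((L+1) mod N)) in *.
  set (d3 := x ((L+2) mod N) - y ((L+2) mod N)) in *.
  replace (x (L mod N) * INR L + x ((L + 1) mod N) * INR (L + 1) + x ((L + 2) mod N) * INR (L + 2) -
    (y (L mod N) * INR L + y ((L + 1) mod N) * INR (L + 1) + y ((L + 2) mod N) * INR (L + 2)))
    with ((d1 * INR L + d2 * INR (L+1)) + d3 * INR (L+2)) by (unfold d1, d2, d3; ring).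
  eapply Rle_trans; [apply Rabs_triang|]. eapply Rle_trans; [apply Rplus_le_compat_r, Rabs_triang|].
  rewrite !Rabs_mult, !(Rabs_pos_eq (INR _)) by auto.
  pose proof (Rabs_pos d1). pose proof (Rabs_pos d2). pose proof (Rabs_pos d3).
  assert (Rabs d1 * INR L <= dist N x y * (INR N + 2)) by (apply Rmult_le_compat; auto).
  assert (Rabs d2 * INR (L+1) <= dist N x y * (INR N + 2)) by (apply Rmult_le_compat; auto).
  assert (Rabs d3 * INR (L+2) <= dist N x y * (INR N + 2)) by (apply Rmult_le_compat; auto).
  lra.
Qed.

Lemma Hl_lip N L x y : (0 < N)%nat -> Rabs (Hl N L x - Hl N L y) <= 3 * dist N x y.
Proof.
  intros HN. unfold Hl.
  assert (B1 := dist_coord N x y (L mod N) (mod_lt N L HN)).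
  assert (B2 := dist_coord N x y ((L+1) mod N) (mod_lt N (L+1) HN)).
  assert (B3 := dist_coord N x y ((L+2) mod N) (mod_lt N (L+2) HN)).
  set (d1 := x (L mod N) - y (L mod N)) in *. set (d2 := x ((L+1) mod N) - y ((L+1) mod N)) in *.
  set (d3 := x ((L+2) mod N) - y ((L+2) mod N)) in *.
  replace (x (L mod N) * Ep L + x ((L + 1) mod N) * Ep (L + 1) + x ((L + 2) mod N) * Ep (L + 2) -
    (y (L mod N) * Ep L + y ((L + 1) mod N) * Ep (L + 1) + y ((L + 2) mod N) * Ep (L + 2)))
    with ((d1 * Ep L + d2 * Ep (L+1)) + d3 * Ep (L+2)) by (unfold d1, d2, d3; ring).
  eapply Rle_trans; [apply Rabs_triang|]. eapply Rle_trans; [apply Rplus_le_compat_r, Rabs_triang|].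
  rewrite !Rabs_mult.
  assert (forall p, Rabs (Ep p) <= 1) by (intro p; destruct (Ep_01 p) as [E|E]; rewrite E;
    [rewrite Rabs_R0|rewrite Rabs_R1]; lra).
  pose proof (Rabs_pos d1). pose proof (Rabs_pos d2). pose proof (Rabs_pos d3).
  assert (Rabs d1 * Rabs (Ep L) <= dist N x y * 1) by (apply Rmult_le_compat; auto; apply Rabs_pos).
  assert (Rabs d2 * Rabs (Ep (L+1)) <= dist N x y * 1) by (apply Rmult_le_compat; auto; apply Rabs_pos).
  assert (Rabs d3 * Rabs (Ep (L+2)) <= dist N x y * 1) by (apply Rmult_le_compat; auto; apply Rabs_pos).
  lra.
Qed.

Fixpoint minpos (x : Rpoint) (m : nat) : R :=
  match m with O => 1 | S m' => if Req_EM_T (x m') 0 then minpos x m' else Rmin (minpos x m') (x m') end.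

Lemma minpos_pos x m : (forall j, 0 <= x j) -> 0 < minpos x m.
Proof.
  intros Hx. induction m; simpl; [lra|]. destruct Req_EM_T; auto.
  apply Rmin_glb_lt; auto. destruct (Hx m); [auto|congruence].
Qed.

Lemma minpos_le x m j : (j < m)%nat -> x j <> 0 -> minpos x m <= x j.
Proof.
  induction m; intros Hj Hx; [lia|]. simpl. destruct (Nat.eq_dec j m) as [->|Hne].
  - destruct Req_EM_T; [congruence|]. apply Rmin_r.
  - destruct Req_EM_T; [apply IHm; auto; lia|]. eapply Rle_trans; [apply Rmin_l|]. apply IHm; auto; lia.
Qed.
Lemma inTri_mod N L x : (0 < N)%nat -> inTri N (L mod N) x <-> inTri N L x.
Proof. intros HN. unfold inTri. rewrite mod_mod, !mod_plus_l by lia. tauto. Qed.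

Lemma Hvec_tri N p u h a b c : (3 <= N)%nat -> (p < 2 * N)%nat -> inLT p u h a b c ->
  inTri N p (Hvec N u h).
Proof.
  intros HN Hp HL j Hj Hnz. rewrite (Hvec_eval N p u h a b c) in Hnz by auto.
  apply coefm_nz in Hnz. auto.
Qed.

Lemma coefm_self N L x : (3 <= N)%nat -> inTri N L x -> forall j, (j < N)%nat ->
  coefm N L j (x (L mod N)) (x ((L+1) mod N)) (x ((L+2) mod N)) = x j.
Proof.
  intros HN HT j Hj. unfold coefm.
  repeat match goal with |- context [Nat.eqb ?x ?y] => destruct (Nat.eqb_spec x y); [subst; reflexivity|] end.
  destruct (Req_EM_T (x j) 0) as [E|E]; [auto|].
  destruct (HT j Hj E) as [?|[?|?]]; contradiction.
Qed.

Lemma Ul_at N p x a b c u h : inLT p u h a b c -> x (p mod N) = a -> x ((p+1) mod N) = b ->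
  x ((p+2) mod N) = c -> Ul N p x = u /\ Hl N p x = h.
Proof.
  intros (_ & _ & _ & _ & Hu & Hh) E1 E2 E3. unfold Ul, Hl. rewrite E1, E2, E3. auto.
Qed.

Definition Pin (N : nat) (u h : R) := 1 < u <= INR N + 1 /\ 0 <= h <= 1.

Lemma gf N (P : R -> R -> Rpoint) (M : Rpoint -> Prop) x :
  (5 <= N)%nat -> deckP N P ->
  (forall u h u' h', Pin N u h -> Pin N u' h' -> P u h = P u' h' -> u = u' /\ h = h') ->
  (forall u h, 0 <= u <= INR N + 2 -> 0 <= h <= 1 -> M (P u h)) ->
  (forall y, M y -> exists u h, 1 < u <= INR N + 1 /\ 0 <= h <= 1 /\ y = P u h) ->
  Zig N x -> gZ N P (fZ N P x) = x.
Proof.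
  intros HN HD Hinj Hin Hpar HZ.
  destruct (ich_spec N x HZ) as [Hi HT]. set (i := ich N x) in *.
  assert (HZ' := HZ). destruct HZ' as (Hv & Hpos & Hs & _).
  assert (S3 := tri_sum N i x ltac:(lia) Hs HT).
  assert (HL := inLT_of N i x Hpos S3).
  set (U := Ul N i x) in *. set (H := Hl N i x) in *.
  set (a := x (i mod N)) in *. set (b := x ((i+1) mod N)) in *. set (c := x ((i+2) mod N)) in *.
  assert (HU := inLT_u _ _ _ _ _ _ HL). assert (HH := inLT_h _ _ _ _ _ _ HL).
  assert (Ii : INR i + 1 <= INR N) by (rewrite <- S_INR; apply le_INR; lia).
  assert (I5 : 5 <= INR N) by (replace 5 with (INR 5) by (simpl; lra); apply le_INR; lia).
  assert (Hfx : fZ N P x = P U H) by reflexivity. pose proof (pos_INR i).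
  assert (Ex : exists p' U' H', (p' = i \/ p' = i + N)%nat /\ inLT p' U' H' a b c /\ Pin N U' H' /\ P U' H' = P U H).
  { destruct (Rle_lt_dec U 1).
    - exists (i + N)%nat, (U + INR N), (flip (Nat.odd N) H). split; [auto|]. split; [apply inLT_deck; auto|].
      split; [|apply HD]. unfold Pin, flip; destruct (Nat.odd N); repeat split; lra.
    - exists i, U, H. split; [auto|]. split; auto. split; [|auto]. unfold Pin; repeat split; lra. }
  destruct Ex as [p' [U' [H' [Hp' [HL' [HR' HP']]]]]].
  assert (HM : M (fZ N P x)) by (rewrite Hfx; apply Hin; lra).
  destruct (prm_spec N P _ (Hpar _ HM)) as [R1 [R2 R3]].
  set (us := fst (prm N P (fZ N P x))) in *. set (hs := snd (prm N P (fZ N P x))) in *.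
  assert (R4 : P U' H' = P us hs) by (rewrite HP', <- Hfx; exact R3).
  destruct (Hinj _ _ _ _ HR' (conj R1 R2) R4) as [E1 E2].
  unfold gZ. fold us hs. rewrite <- E1, <- E2.
  apply functional_extensionality. intros j.
  destruct (Nat.lt_ge_cases j N).
  - rewrite (Hvec_eval N p' U' H' a b c) by (auto; lia).
    destruct Hp' as [->| ->]; [|rewrite coefm_addN]; apply coefm_self; auto; lia.
  - rewrite Hvec_out by auto. rewrite Hv by auto. reflexivity.
Qed.

Lemma gZ_in N (P : R -> R -> Rpoint) (M : Rpoint -> Prop) y :
  (5 <= N)%nat ->
  (forall y, M y -> exists u h, 1 < u <= INR N + 1 /\ 0 <= h <= 1 /\ y = P u h) ->
  M y -> Zig N (gZ N P y).
Proof.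
  intros HN Hpar HM. destruct (prm_spec N P y (Hpar y HM)) as [R1 [R2 R3]].
  destruct (locator N (fst (prm N P y)) (snd (prm N P y)) ltac:(lra) R2) as [p [a [b [c [Hp HL]]]]].
  apply (Hvec_zig N p _ _ a b c); auto; lia.
Qed.

Lemma fg N (P : R -> R -> Rpoint) (M : Rpoint -> Prop) y :
  (5 <= N)%nat -> deckP N P ->
  (forall y, M y -> exists u h, 1 < u <= INR N + 1 /\ 0 <= h <= 1 /\ y = P u h) ->
  M y -> fZ N P (gZ N P y) = y.
Proof.
  intros HN HD Hpar HM.
  assert (HZ := gZ_in N P M y HN Hpar HM).
  destruct (prm_spec N P y (Hpar y HM)) as [R1 [R2 R3]].
  unfold gZ in *. set (u := fst (prm N P y)) in *. set (h := snd (prm N P y)) in *.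
  destruct (locator N u h ltac:(lra) R2) as [p [a [b [c [Hp HL]]]]].
  set (x := Hvec N u h) in *.
  destruct (Hvec_vals N p u h a b c ltac:(lia) ltac:(lia) HL) as [V1 [V2 V3]].
  assert (Tp : inTri N p x) by (apply (Hvec_tri N p u h a b c); auto; lia).
  destruct (ich_spec N x HZ) as [Hi HT].
  unfold fZ. rewrite (Wdef N P x (ich N x) (p mod N)); auto; [| apply mod_lt; lia | apply inTri_mod; auto; lia].
  assert (Ep' : P (Ul N (p mod N) x) (Hl N (p mod N) x) = P (Ul N p x) (Hl N p x)).
  { destruct (mod2 N p ltac:(lia) ltac:(lia)) as [[? E]|[? E]]; rewrite E; [reflexivity|].
    replace p with ((p - N) + N)%nat at 3 4 by lia.
    rewrite (Wdeck N P x (p - N)); auto; try lia.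
    replace (p - N)%nat with (p mod N) by auto. apply inTri_mod; auto; lia. }
  rewrite Ep'. destruct (Ul_at N p x a b c u h HL V1 V2 V3) as [-> ->]. auto.
Qed.

Lemma fZ_in N (P : R -> R -> Rpoint) (M : Rpoint -> Prop) x :
  (5 <= N)%nat ->
  (forall u h, 0 <= u <= INR N + 2 -> 0 <= h <= 1 -> M (P u h)) ->
  Zig N x -> M (fZ N P x).
Proof.
  intros HN Hin HZ.
  destruct (ich_spec N x HZ) as [Hi HT].
  assert (HZ' := HZ). destruct HZ' as (Hv & Hpos & Hs & _).
  assert (S3 := tri_sum N _ x ltac:(lia) Hs HT).
  assert (HL := inLT_of N _ x Hpos S3).
  assert (HU := inLT_u _ _ _ _ _ _ HL). assert (HH := inLT_h _ _ _ _ _ _ HL).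
  assert (INR (ich N x) <= INR N) by (apply le_INR; lia).
  unfold fZ. apply Hin; auto. pose proof (pos_INR (ich N x)). lra.
Qed.
Definition LipP (P : R -> R -> Rpoint) := exists K, 0 < K /\ forall u h u' h', 0 <= h <= 1 -> 0 <= h' <= 1 ->
  dist 3 (P u h) (P u' h') <= K * (Rabs (u - u') + Rabs (h - h')).

Definition NearP (N : nat) (P : R -> R -> Rpoint) := forall eps, 0 < eps -> exists delta, 0 < delta /\
  forall u h u' h', Pin N u h -> Pin N u' h' -> dist 3 (P u h) (P u' h') < delta ->
    (Rabs (u - u') < eps /\ Rabs (h - h') < eps) \/
    (Rabs (u' + INR N - u) < eps /\ Rabs (flip (Nat.odd N) h' - h) < eps) \/
    (Rabs (u + INR N - u') < eps /\ Rabs (flip (Nat.odd N) h - h') < eps).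

Lemma fZ_cont N (P : R -> R -> Rpoint) : (5 <= N)%nat -> deckP N P -> LipP P -> cont_on N 3 (Zig N) (fZ N P).
Proof.
  intros HN HD [K [HK HL]] x Hx eps Heps.
  assert (Hx' := Hx). destruct Hx' as (Hv & Hpos & Hs & _).
  set (C := 3 * (INR N + 2) + 3).
  assert (HC : 0 < C) by (unfold C; pose proof (pos_INR N); lra).
  set (m := minpos x N). assert (Hm : 0 < m) by (apply minpos_pos; auto).
  assert (He : 0 < eps / (K * C)) by (apply Rdiv_lt_0_compat; auto; apply Rmult_lt_0_compat; auto).
  exists (Rmin m (eps / (K * C))). split; [apply Rmin_glb_lt; auto|].
  intros y Hy Hd.
  assert (Hd1 : dist N x y < m) by (eapply Rlt_le_trans; [apply Hd|apply Rmin_l]).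
  assert (Hd2 : dist N x y < eps / (K * C)) by (eapply Rlt_le_trans; [apply Hd|apply Rmin_r]).
  destruct (ich_spec N y Hy) as [Hi' HT'].
  destruct (ich_spec N x Hx) as [Hi HT].
  set (i' := ich N y) in *.
  assert (HTx : inTri N i' x).
  { intros j Hj Hxj. apply HT'; auto. intro Hyj.
    assert (B := dist_coord N x y j Hj). rewrite Hyj, Rminus_0_r in B.
    assert (B2 := minpos_le x N j Hj Hxj). fold m in B2.
    rewrite Rabs_pos_eq in B by auto. lra. }
  unfold fZ at 1. rewrite (Wdef N P x (ich N x) i'); auto.
  unfold fZ. fold i'.
  assert (Hy' := Hy). destruct Hy' as (_ & Hposy & Hsy & _).
  assert (Hhx := inLT_h _ _ _ _ _ _ (inLT_of N i' x Hpos (tri_sum N i' x ltac:(lia) Hs HTx))).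
  assert (Hhy := inLT_h _ _ _ _ _ _ (inLT_of N i' y Hposy (tri_sum N i' y ltac:(lia) Hsy HT'))).
  eapply Rle_lt_trans; [apply HL; auto|].
  assert (L1 := Ul_lip N i' x y ltac:(lia) Hi'). assert (L2 := Hl_lip N i' x y ltac:(lia)).
  assert (Rabs (Ul N i' x - Ul N i' y) + Rabs (Hl N i' x - Hl N i' y) <= C * dist N x y) by (unfold C; lra).
  assert (C * dist N x y < C * (eps / (K * C))) by (apply Rmult_lt_compat_l; auto).
  replace (C * (eps / (K * C))) with (eps / K) in H0 by (field; lra).
  apply Rle_lt_trans with (K * (C * dist N x y)).
  - apply Rmult_le_compat_l; lra.
  - apply Rmult_lt_reg_l with (/ K). apply Rinv_0_lt_compat; auto.
    replace (/ K * (K * (C * dist N x y))) with (C * dist N x y) by (field; lra).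
    replace (/ K * eps) with (eps / K) by (field; lra). auto.
Qed.

Lemma gZ_cont N (P : R -> R -> Rpoint) (M : Rpoint -> Prop) : (5 <= N)%nat -> NearP N P ->
  (forall y, M y -> exists u h, 1 < u <= INR N + 1 /\ 0 <= h <= 1 /\ y = P u h) ->
  cont_on 3 N M (gZ N P).
Proof.
  intros HN Hnear Hpar y Hy eps Heps.
  destruct (Hnear (eps / 6) ltac:(lra)) as [d [Hd Hnd]].
  exists d. split; auto. intros y' Hy' Hdy.
  destruct (prm_spec N P y (Hpar y Hy)) as [R1 [R2 R3]].
  destruct (prm_spec N P y' (Hpar y' Hy')) as [R1' [R2' R3']].
  unfold gZ. set (u := fst (prm N P y)) in *. set (h := snd (prm N P y)) in *.
  set (u' := fst (prm N P y')) in *. set (h' := snd (prm N P y')) in *.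
  assert (Hd' : dist 3 (P u h) (P u' h') < d) by (rewrite <- R3, <- R3'; exact Hdy).
  assert (HN3 : (3 <= N)%nat) by lia.
  destruct (Hnd u h u' h' (conj R1 R2) (conj R1' R2') Hd') as [[A1 A2]|[[A1 A2]|[A1 A2]]].
  - apply dist_lt; [lra|]. intros j Hj. eapply Rle_lt_trans; [apply Hvec_lip|]. lra.
  - rewrite <- (Hvec_deck N u' h') by (auto; lra).
    apply dist_lt; [lra|]. intros j Hj. eapply Rle_lt_trans; [apply Hvec_lip|].
    rewrite Rabs_minus_sym in A1. rewrite Rabs_minus_sym in A2. lra.
  - rewrite <- (Hvec_deck N u h) by (auto; lra).
    apply dist_lt; [lra|]. intros j Hj. eapply Rle_lt_trans; [apply Hvec_lip|]. lra.
Qed.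

Theorem zig_homeo N (P : R -> R -> Rpoint) (M : Rpoint -> Prop) :
  (5 <= N)%nat -> deckP N P -> LipP P ->
  (forall u h u' h', Pin N u h -> Pin N u' h' -> P u h = P u' h' -> u = u' /\ h = h') ->
  NearP N P ->
  (forall u h, 0 <= u <= INR N + 2 -> 0 <= h <= 1 -> M (P u h)) ->
  (forall y, M y -> exists u h, 1 < u <= INR N + 1 /\ 0 <= h <= 1 /\ y = P u h) ->
  homeomorphic N (Zig N) 3 M.
Proof.
  intros HN HD HL Hinj Hnear Hin Hpar.
  exists (fZ N P), (gZ N P). split; [|split; [|split; [|split; [|split]]]].
  - intros x Hx. apply fZ_in; auto.
  - intros z Hz. apply (gZ_in N P M); auto.
  - intros x Hx. apply (gf N P M); auto.
  - intros z Hz. apply (fg N P M); auto.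
  - apply fZ_cont; auto.
  - apply (gZ_cont N P M); auto.
Qed.
Lemma sin_abs_le x : Rabs (sin x) <= Rabs x.
Proof.
  assert (K : forall y, 0 < y -> -y <= sin y <= y).
  { intros y Hy. split; [|left; apply sin_lt_x; auto].
    destruct (Rle_lt_dec y PI).
    - pose proof (sin_ge_0 y ltac:(lra) r). lra.
    - pose proof (SIN_bound y). pose proof PI_RGT_0. pose proof PI2_3_2. lra. }
  destruct (total_order_T x 0) as [[H|H]|H].
  - pose proof (K (-x) ltac:(lra)). rewrite sin_neg in H0.
    rewrite (Rabs_left x) by auto. unfold Rabs; destruct Rcase_abs; lra.
  - subst. rewrite sin_0. right; reflexivity.
  - pose proof (K x H). rewrite (Rabs_pos_eq x) by lra. unfold Rabs; destruct Rcase_abs; lra.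
Qed.

Lemma cos_lip a b : Rabs (cos a - cos b) <= Rabs (a - b).
Proof.
  rewrite form2. rewrite !Rabs_mult.
  pose proof (sin_abs_le ((a - b)/2)). pose proof (SIN_bound ((a+b)/2)).
  assert (Rabs (sin ((a + b)/2)) <= 1) by (unfold Rabs; destruct Rcase_abs; lra).
  replace ((a - b)/2) with ((a-b) * /2) in H by reflexivity. rewrite Rabs_mult in H.
  rewrite (Rabs_pos_eq (/2)) in H by lra. assert (E2 : Rabs (-2) = 2) by (unfold Rabs; destruct Rcase_abs; lra). rewrite E2.
  pose proof (Rabs_pos (sin ((a - b)/2))). pose proof (Rabs_pos (sin ((a + b)/2))).
  assert (Rabs (sin ((a - b) / 2)) * Rabs (sin ((a + b) / 2)) <= Rabs (a - b) * / 2 * 1)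
    by (apply Rmult_le_compat; auto).
  lra.
Qed.

Lemma sin_lip a b : Rabs (sin a - sin b) <= Rabs (a - b).
Proof.
  rewrite form4. rewrite !Rabs_mult.
  pose proof (sin_abs_le ((a - b)/2)). pose proof (COS_bound ((a+b)/2)).
  assert (Rabs (cos ((a + b)/2)) <= 1) by (unfold Rabs; destruct Rcase_abs; lra).
  replace ((a - b)/2) with ((a-b) * /2) in H by reflexivity. rewrite Rabs_mult in H.
  rewrite (Rabs_pos_eq (/2)) in H by lra. rewrite (Rabs_pos_eq 2) by lra.
  pose proof (Rabs_pos (sin ((a - b)/2))). pose proof (Rabs_pos (cos ((a + b)/2))).
  assert (Rabs (cos ((a + b) / 2)) * Rabs (sin ((a - b) / 2)) <= 1 * (Rabs (a - b) * / 2))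
    by (apply Rmult_le_compat; auto).
  lra.
Qed.

Lemma cos_lt1 e : 0 < e <= PI -> cos e < 1.
Proof. intros H. rewrite <- cos_0. apply cos_decreasing_1; lra. Qed.

Lemma cos_2PI_minus d : cos (2 * PI - d) = cos d.
Proof. rewrite cos_minus, cos_2PI, sin_2PI. ring. Qed.

Lemma circle_pos d e : 0 <= d < 2 * PI -> 0 < e <= PI -> cos d > cos e -> d < e \/ 2 * PI - d < e.
Proof.
  intros Hd He Hc. destruct (Rle_lt_dec d PI).
  - left. destruct (Rlt_le_dec d e); auto. exfalso.
    destruct (Req_dec d e) as [<-|Hne]; [lra|].
    assert (cos d < cos e) by (apply cos_decreasing_1; lra). lra.
  - right. rewrite <- cos_2PI_minus in Hc.
    destruct (Rlt_le_dec (2 * PI - d) e); auto. exfalso.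
    destruct (Req_dec (2 * PI - d) e) as [E|Hne]; [rewrite E in Hc; lra|].
    assert (cos (2 * PI - d) < cos e) by (apply cos_decreasing_1; lra). lra.
Qed.

Lemma circle d e : - (2 * PI) < d < 2 * PI -> 0 < e <= PI -> cos d > cos e ->
  Rabs d < e \/ Rabs (d - 2 * PI) < e \/ Rabs (d + 2 * PI) < e.
Proof.
  intros Hd He Hc. destruct (Rle_lt_dec 0 d).
  - destruct (circle_pos d e ltac:(lra) He Hc) as [H|H].
    + left; rewrite Rabs_pos_eq; lra.
    + right; left. rewrite Rabs_left by lra. lra.
  - rewrite <- cos_neg in Hc. destruct (circle_pos (-d) e ltac:(lra) He Hc) as [H|H].
    + left; rewrite Rabs_left; lra.
    + right; right. rewrite Rabs_pos_eq by lra. lra.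
Qed.

Lemma cos_eq1 d : - (2 * PI) < d < 2 * PI -> cos d = 1 -> d = 0.
Proof.
  intros Hd Hc. destruct (Req_dec d 0) as [|Hne]; auto. exfalso.
  assert (HP := PI_RGT_0).
  assert (Hd0 : 0 < Rabs d) by (apply Rabs_pos_lt; auto).
  assert (Hd1 : Rabs d < 2 * PI) by (unfold Rabs; destruct Rcase_abs; lra).
  set (e := Rmin PI (Rmin (Rabs d / 2) ((2 * PI - Rabs d) / 2))).
  assert (He : 0 < e <= PI).
  { unfold e. split; [apply Rmin_glb_lt; [lra|apply Rmin_glb_lt; lra] | apply Rmin_l]. }
  assert (cos e < 1) by (apply cos_lt1; auto).
  assert (E1 : e <= Rabs d / 2) by (eapply Rle_trans; [apply Rmin_r|apply Rmin_l]).
  assert (E3 : e <= (2 * PI - Rabs d) / 2) by (eapply Rle_trans; [apply Rmin_r|apply Rmin_r]).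
  assert (E2 : e <= PI) by apply Rmin_l. revert E3.
  destruct (circle d e Hd He ltac:(lra)) as [G|[G|G]]; revert G E1 E2; unfold Rabs; repeat destruct Rcase_abs; lra.
Qed.

Lemma angle_exists c s : c ^ 2 + s ^ 2 = 1 -> exists t, 0 <= t < 2 * PI /\ cos t = c /\ sin t = s.
Proof.
  intros H. assert (HP := PI_RGT_0).
  assert (Hc : -1 <= c <= 1) by (split; nra).
  assert (Hsq : sqrt (1 - c²) = Rabs s).
  { rewrite <- sqrt_Rsqr_abs. f_equal. unfold Rsqr. nra. }
  destruct (Rle_lt_dec 0 s).
  - exists (acos c). pose proof (acos_bound c). split; [lra|]. split; [apply cos_acos; auto|].
    rewrite sin_acos by auto. rewrite Hsq. apply Rabs_pos_eq; auto.
  - assert (Hc' : -1 < c < 1) by (split; nra).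
    pose proof (acos_bound_lt c Hc').
    exists (2 * PI - acos c). split; [lra|]. split.
    + rewrite cos_2PI_minus. apply cos_acos; auto.
    + rewrite sin_minus, cos_2PI, sin_2PI, sin_acos by auto. rewrite Hsq, Rabs_left by auto. ring.
Qed.

Lemma dist3_coords a b d : dist 3 a b < d ->
  Rabs (a 0%nat - b 0%nat) < d /\ Rabs (a 1%nat - b 1%nat) < d /\ Rabs (a 2%nat - b 2%nat) < d.
Proof.
  intros H. repeat split; (eapply Rle_lt_trans; [apply dist_coord|apply H]; lia).
Qed.

Lemma dist3_le a b K : 0 <= K -> Rabs (a 0%nat - b 0%nat) <= K -> Rabs (a 1%nat - b 1%nat) <= K ->
  Rabs (a 2%nat - b 2%nat) <= K -> dist 3 a b <= K.
Proof.
  intros H0 H1 H2 H3. apply dist_le; auto. intros i Hi.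
  destruct i as [|[|[|i]]]; auto; lia.
Qed.

Lemma prod_bound a b a' b' Bb Ba : Rabs b <= Bb -> Rabs a' <= Ba ->
  Rabs (a * b - a' * b') <= Bb * Rabs (a - a') + Ba * Rabs (b - b').
Proof.
  intros H1 H2. replace (a * b - a' * b') with ((a - a') * b + a' * (b - b')) by ring.
  eapply Rle_trans; [apply Rabs_triang|]. rewrite !Rabs_mult.
  pose proof (Rabs_pos (a - a')). pose proof (Rabs_pos (b - b')). pose proof (Rabs_pos b). pose proof (Rabs_pos a').
  assert (Rabs (a - a') * Rabs b <= Bb * Rabs (a - a')) by (rewrite Rmult_comm; apply Rmult_le_compat_r; auto).
  assert (Rabs a' * Rabs (b - b') <= Ba * Rabs (b - b')) by (apply Rmult_le_compat_r; auto).
  lra.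
Qed.

Lemma Rabs_le_1_cos x : Rabs (cos x) <= 1.
Proof. pose proof (COS_bound x). unfold Rabs; destruct Rcase_abs; lra. Qed.
Lemma Rabs_le_1_sin x : Rabs (sin x) <= 1.
Proof. pose proof (SIN_bound x). unfold Rabs; destruct Rcase_abs; lra. Qed.
Definition ang (N : nat) (u : R) : R := 2 * PI * u / INR N.

Lemma INR_pos N : (1 <= N)%nat -> 0 < INR N.
Proof. intros; apply lt_0_INR; lia. Qed.

Lemma ang_diff N u u' : (1 <= N)%nat -> ang N u - ang N u' = (2 * PI / INR N) * (u - u').
Proof. intros HN. unfold ang. assert (INR N <> 0) by (pose proof (INR_pos N HN); lra). field; auto. Qed.

Lemma ang_shift N u : (1 <= N)%nat -> ang N (u + INR N) = ang N u + 2 * PI.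
Proof. intros HN. unfold ang. assert (INR N <> 0) by (pose proof (INR_pos N HN); lra). field; auto. Qed.

Lemma kpos N : (1 <= N)%nat -> 0 < 2 * PI / INR N.
Proof. intros HN. apply Rdiv_lt_0_compat; [pose proof PI_RGT_0; lra| apply INR_pos; auto]. Qed.

Lemma k_le N : (1 <= N)%nat -> 2 * PI / INR N <= 8.
Proof.
  intros HN. assert (1 <= INR N) by (replace 1 with (INR 1) by reflexivity; apply le_INR; auto).
  pose proof PI_4. pose proof PI_RGT_0.
  apply Rmult_le_reg_r with (INR N); [lra|]. unfold Rdiv. rewrite Rmult_assoc, Rinv_l by lra. nra.
Qed.

Lemma k_lt N : (2 <= N)%nat -> 2 * PI / INR N < 2 * PI.
Proof.
  intros HN. assert (2 <= INR N) by (replace 2 with (INR 2) by reflexivity; apply le_INR; auto).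
  pose proof PI_RGT_0.
  apply Rmult_lt_reg_r with (INR N); [lra|]. unfold Rdiv. rewrite Rmult_assoc, Rinv_l by lra. nra.
Qed.

Lemma ang_lip N u u' : (1 <= N)%nat -> Rabs (ang N u - ang N u') <= 8 * Rabs (u - u').
Proof.
  intros HN. rewrite ang_diff, Rabs_mult by auto. rewrite (Rabs_pos_eq (2 * PI / INR N)) by (left; apply kpos; auto).
  apply Rmult_le_compat_r; [apply Rabs_pos|apply k_le; auto].
Qed.

Lemma ang_small N a b e : (1 <= N)%nat -> Rabs (ang N a - ang N b) < 2 * PI / INR N * e -> Rabs (a - b) < e.
Proof.
  intros HN H. rewrite ang_diff, Rabs_mult in H by auto.
  rewrite (Rabs_pos_eq (2 * PI / INR N)) in H by (left; apply kpos; auto).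
  apply Rmult_lt_reg_l with (2 * PI / INR N); auto. apply kpos; auto.
Qed.

Lemma ang_range N u : (1 <= N)%nat -> 1 < u <= INR N + 1 -> 2 * PI / INR N < ang N u <= 2 * PI + 2 * PI / INR N.
Proof.
  intros HN Hu. assert (Hk := kpos N HN). assert (HNp := INR_pos N HN).
  replace (ang N u) with (2 * PI / INR N * u) by (unfold ang; field; lra).
  split.
  - rewrite <- (Rmult_1_r (2 * PI / INR N)) at 1. apply Rmult_lt_compat_l; lra.
  - replace (2 * PI + 2 * PI / INR N) with (2 * PI / INR N * (INR N + 1)) by (field; lra).
    apply Rmult_le_compat_l; lra.
Qed.

Lemma sq_lt x d : Rabs x < d -> x ^ 2 < d ^ 2.
Proof. intros H. pose proof (Rabs_pos x). unfold Rabs in H; destruct Rcase_abs; nra. Qed.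

Definition Cyl (t h : R) : Rpoint :=
  fun i => match i with 0%nat => cos t | 1%nat => sin t | 2%nat => h | _ => 0 end.
Definition Pcyl (N : nat) (u h : R) : Rpoint := Cyl (ang N u) h.

Lemma cyl_deck N : (1 <= N)%nat -> Nat.odd N = false -> deckP N (Pcyl N).
Proof.
  intros HN Ho u h. unfold Pcyl. rewrite Ho. unfold flip. rewrite ang_shift by auto.
  unfold Cyl. apply functional_extensionality; intros [|[|[|i]]]; auto.
  - rewrite cos_plus, cos_2PI, sin_2PI. ring.
  - rewrite sin_plus, cos_2PI, sin_2PI. ring.
Qed.

Lemma cyl_lip N : (1 <= N)%nat -> LipP (Pcyl N).
Proof.
  intros HN. exists 8. split; [lra|]. intros u h u' h' _ _.
  pose proof (ang_lip N u u' HN). pose proof (Rabs_pos (h - h')). pose proof (Rabs_pos (u - u')).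
  apply dist3_le; [nra| | |]; unfold Pcyl, Cyl.
  - eapply Rle_trans; [apply cos_lip|]. lra.
  - eapply Rle_trans; [apply sin_lip|]. lra.
  - lra.
Qed.

Lemma cyl_inj N : (1 <= N)%nat -> forall u h u' h', Pin N u h -> Pin N u' h' -> Pcyl N u h = Pcyl N u' h' -> u = u' /\ h = h'.
Proof.
  intros HN u h u' h' [Hu Hh] [Hu' Hh'] E.
  assert (E0 := f_equal (fun y => y 0%nat) E). assert (E1 := f_equal (fun y => y 1%nat) E).
  assert (E2 := f_equal (fun y => y 2%nat) E). simpl in E0, E1, E2. unfold Pcyl, Cyl in E0, E1, E2.
  split; auto.
  assert (C : cos (ang N u - ang N u') = 1).
  { rewrite cos_minus, <- E0, <- E1. pose proof (sin2_cos2 (ang N u)). unfold Rsqr in H. lra. }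
  pose proof (ang_range N u HN Hu). pose proof (ang_range N u' HN Hu').
  apply cos_eq1 in C; [|lra].
  rewrite ang_diff in C by auto. apply Rmult_integral in C. destruct C; [|lra].
  pose proof (kpos N HN). lra.
Qed.

Lemma cos_gt_of (t t' d : R) : (cos t - cos t') ^ 2 + (sin t - sin t') ^ 2 < 2 * d ->
  cos (t - t') > 1 - d.
Proof.
  intros H. rewrite cos_minus. pose proof (sin2_cos2 t). pose proof (sin2_cos2 t').
  unfold Rsqr in *. nra.
Qed.

Lemma cyl_near N : (1 <= N)%nat -> Nat.odd N = false -> NearP N (Pcyl N).
Proof.
  intros HN Ho eps Heps.
  assert (Hk := kpos N HN). assert (HP := PI_RGT_0).
  set (eta := Rmin PI (2 * PI / INR N * eps)).
  assert (Heta : 0 < eta <= PI) by (unfold eta; split; [apply Rmin_glb_lt; [lra|nra]|apply Rmin_l]).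
  assert (Heta2 : eta <= 2 * PI / INR N * eps) by apply Rmin_r.
  assert (Hc := cos_lt1 eta Heta).
  exists (Rmin eps (Rmin 1 (1 - cos eta))). split; [apply Rmin_glb_lt; [lra|apply Rmin_glb_lt; lra]|].
  intros u h u' h' [Hu Hh] [Hu' Hh'] Hd.
  set (d := Rmin eps (Rmin 1 (1 - cos eta))) in *.
  assert (D1 : d <= eps) by apply Rmin_l.
  assert (D2 : d <= 1) by (eapply Rle_trans; [apply Rmin_r|apply Rmin_l]).
  assert (D3 : d <= 1 - cos eta) by (eapply Rle_trans; [apply Rmin_r|apply Rmin_r]).
  assert (Hd0 : 0 < d) by (pose proof (dist_ge0 3 (Pcyl N u h) (Pcyl N u' h')); lra).
  destruct (dist3_coords _ _ _ Hd) as [C0 [C1 C2]]. unfold Pcyl, Cyl in C0, C1, C2.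
  apply sq_lt in C0. apply sq_lt in C1.
  assert (Hcos : cos (ang N u - ang N u') > cos eta).
  { assert (d ^ 2 <= d) by nra.
    assert (cos (ang N u - ang N u') > 1 - d) by (apply cos_gt_of; lra). lra. }
  pose proof (ang_range N u HN Hu). pose proof (ang_range N u' HN Hu').
  rewrite Ho; unfold flip.
  destruct (circle (ang N u - ang N u') eta ltac:(split; lra) Heta Hcos) as [G|[G|G]].
  - left. split; [apply (ang_small N); [auto|lra]|lra].
  - right; left. split; [|rewrite Rabs_minus_sym; lra].
    apply (ang_small N); [auto|]. rewrite ang_shift by auto.
    replace (ang N u' + 2 * PI - ang N u) with (-(ang N u - ang N u' - 2 * PI)) by ring.
    rewrite Rabs_Ropp. lra.
  - right; right. split; [|lra].
    apply (ang_small N); [auto|]. rewrite ang_shift by auto.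
    replace (ang N u + 2 * PI - ang N u') with (ang N u - ang N u' + 2 * PI) by ring. lra.
Qed.

Lemma cyl_in N : forall u h, 0 <= u <= INR N + 2 -> 0 <= h <= 1 -> cylinder (Pcyl N u h).
Proof.
  intros u h _ Hh. unfold cylinder, Pcyl, Cyl. split; [intros [|[|[|i]]] Hi; auto; lia|].
  split; auto. pose proof (sin2_cos2 (ang N u)). unfold Rsqr in H. lra.
Qed.

Lemma cyl_par N : (2 <= N)%nat -> forall y, cylinder y -> exists u h, 1 < u <= INR N + 1 /\ 0 <= h <= 1 /\ y = Pcyl N u h.
Proof.
  intros HN y (Hv & Hc & Hh).
  destruct (angle_exists (y 0%nat) (y 1%nat) Hc) as [t [Ht [E0 E1]]].
  assert (HN1 : (1 <= N)%nat) by lia.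
  assert (Hk := kpos N HN1). assert (HNp := INR_pos N HN1). assert (HP := PI_RGT_0). assert (Hkl := k_lt N HN).
  assert (Ex : exists t', 2 * PI / INR N < t' <= 2 * PI + 2 * PI / INR N /\ cos t' = y 0%nat /\ sin t' = y 1%nat).
  { destruct (Rle_lt_dec t (2 * PI / INR N)).
    - exists (t + 2 * PI). rewrite cos_plus, sin_plus, cos_2PI, sin_2PI. split; [split; lra|]. split; lra.
    - exists t. split; [split; lra|]. auto. }
  destruct Ex as [t' [Ht' [F0 F1]]].
  exists (t' * INR N / (2 * PI)), (y 2%nat).
  assert (Ha : ang N (t' * INR N / (2 * PI)) = t') by (unfold ang; field; lra).
  split.
  - split.
    + apply Rmult_lt_reg_l with (2 * PI / INR N); auto.
      replace (2 * PI / INR N * (t' * INR N / (2 * PI))) with t' by (field; lra). lra.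
    + apply Rmult_le_reg_l with (2 * PI / INR N); auto.
      replace (2 * PI / INR N * (t' * INR N / (2 * PI))) with t' by (field; lra).
      replace (2 * PI / INR N * (INR N + 1)) with (2 * PI + 2 * PI / INR N) by (field; lra). lra.
  - split; auto. unfold Pcyl, Cyl. rewrite Ha. apply functional_extensionality; intros [|[|[|i]]]; auto.
    apply Hv; lia.
Qed.

Theorem zig_cyl N : (5 <= N)%nat -> Nat.odd N = false -> homeomorphic N (Zig N) 3 cylinder.
Proof.
  intros HN Ho. apply (zig_homeo N (Pcyl N)); auto.
  - apply cyl_deck; auto; lia.
  - apply cyl_lip; lia.
  - apply cyl_inj; lia.
  - apply cyl_near; auto; lia.
  - apply cyl_in.
  - apply cyl_par; lia.
Qed.
Definition Mob (t s : R) : Rpoint :=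
  fun i => match i with
  | 0%nat => (1 + s * cos (t / 2)) * cos t
  | 1%nat => (1 + s * cos (t / 2)) * sin t
  | 2%nat => s * sin (t / 2)
  | _ => 0 end.
Definition Pmob (N : nat) (u h : R) : Rpoint := Mob (ang N u) (h - 1/2).

Lemma mob_deck_raw t s : Mob (t + 2 * PI) (- s) = Mob t s.
Proof.
  unfold Mob. replace ((t + 2 * PI) / 2) with (t / 2 + PI) by field.
  rewrite neg_cos, neg_sin.
  assert (cos (t + 2 * PI) = cos t) by (rewrite cos_plus, cos_2PI, sin_2PI; ring).
  assert (sin (t + 2 * PI) = sin t) by (rewrite sin_plus, cos_2PI, sin_2PI; ring).
  rewrite H, H0.
  apply functional_extensionality; intros [|[|[|i]]]; auto; ring.
Qed.

Lemma mob_deck N : (1 <= N)%nat -> Nat.odd N = true -> deckP N (Pmob N).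
Proof.
  intros HN Ho u h. unfold Pmob. rewrite Ho. unfold flip. rewrite ang_shift by auto.
  replace (1 - h - 1/2) with (-(h - 1/2)) by lra. apply mob_deck_raw.
Qed.

Lemma mob_lip_raw t s t' s' : Rabs s <= 1/2 -> Rabs s' <= 1/2 ->
  dist 3 (Mob t s) (Mob t' s') <= Rabs (s - s') + 2 * Rabs (t - t').
Proof.
  intros Hs Hs'.
  assert (Hc2 : Rabs (cos (t/2) - cos (t'/2)) <= Rabs (t - t') / 2).
  { eapply Rle_trans; [apply cos_lip|]. replace (t/2 - t'/2) with ((t - t') * /2) by field.
    rewrite Rabs_mult, (Rabs_pos_eq (/2)) by lra. lra. }
  assert (Hs2 : Rabs (sin (t/2) - sin (t'/2)) <= Rabs (t - t') / 2).
  { eapply Rle_trans; [apply sin_lip|]. replace (t/2 - t'/2) with ((t - t') * /2) by field.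
    rewrite Rabs_mult, (Rabs_pos_eq (/2)) by lra. lra. }
  assert (HA : Rabs ((1 + s * cos (t / 2)) - (1 + s' * cos (t' / 2))) <= Rabs (s - s') + Rabs (t - t') / 4).
  { replace ((1 + s * cos (t / 2)) - (1 + s' * cos (t' / 2))) with (s * cos (t/2) - s' * cos (t'/2)) by ring.
    eapply Rle_trans; [apply (prod_bound _ _ _ _ 1 (1/2)); auto; apply Rabs_le_1_cos|].
    pose proof (Rabs_pos (s - s')). lra. }
  assert (HA' : Rabs (1 + s' * cos (t' / 2)) <= 3/2).
  { pose proof (Rabs_le_1_cos (t'/2)).
    assert (Rabs (s' * cos (t'/2)) <= 1/2) by (rewrite Rabs_mult; pose proof (Rabs_pos s'); pose proof (Rabs_pos (cos (t'/2))); nra).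
    pose proof (Rabs_triang 1 (s' * cos (t' / 2))). rewrite Rabs_R1 in H1. lra. }
  pose proof (Rabs_pos (s - s')). pose proof (Rabs_pos (t - t')).
  apply dist3_le; [lra| | |]; unfold Mob.
  - eapply Rle_trans; [apply (prod_bound _ _ _ _ 1 (3/2)); auto; apply Rabs_le_1_cos|].
    pose proof (cos_lip t t'). lra.
  - eapply Rle_trans; [apply (prod_bound _ _ _ _ 1 (3/2)); auto; apply Rabs_le_1_sin|].
    pose proof (sin_lip t t'). lra.
  - eapply Rle_trans; [apply (prod_bound _ _ _ _ 1 (1/2)); auto; apply Rabs_le_1_sin|]. lra.
Qed.

Lemma abs_half h : 0 <= h <= 1 -> Rabs (h - 1/2) <= 1/2.
Proof. intros. unfold Rabs; destruct Rcase_abs; lra. Qed.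

Lemma mob_lip N : (1 <= N)%nat -> LipP (Pmob N).
Proof.
  intros HN. exists 16. split; [lra|]. intros u h u' h' Hh Hh'.
  unfold Pmob. eapply Rle_trans; [apply mob_lip_raw; apply abs_half; auto|].
  pose proof (ang_lip N u u' HN). replace (h - 1/2 - (h' - 1/2)) with (h - h') by lra.
  pose proof (Rabs_pos (h - h')). pose proof (Rabs_pos (u - u')). lra.
Qed.

Lemma mob_ident t1 s1 t2 s2 :
  let A1 := 1 + s1 * cos (t1 / 2) in let A2 := 1 + s2 * cos (t2 / 2) in
  (Mob t1 s1 0%nat - Mob t2 s2 0%nat) ^ 2 + (Mob t1 s1 1%nat - Mob t2 s2 1%nat) ^ 2 =
  (A1 - A2) ^ 2 + 2 * A1 * A2 * (1 - cos (t1 - t2)).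
Proof.
  intros A1 A2. unfold Mob. fold A1 A2. rewrite cos_minus.
  pose proof (sin2_cos2 t1). pose proof (sin2_cos2 t2). unfold Rsqr in *.
  replace ((A1 * cos t1 - A2 * cos t2) ^ 2 + (A1 * sin t1 - A2 * sin t2) ^ 2) with
    ((A1 - A2) ^ 2 + 2 * A1 * A2 * (1 - (cos t1 * cos t2 + sin t1 * sin t2)) +
     A1^2 * (sin t1 * sin t1 + cos t1 * cos t1 - 1) + A2^2 * (sin t2 * sin t2 + cos t2 * cos t2 - 1)) by ring.
  rewrite H, H0. ring.
Qed.

Lemma A_bounds s t : Rabs s <= 1/2 -> 1/2 <= 1 + s * cos (t / 2) <= 3/2.
Proof.
  intros Hs. pose proof (COS_bound (t/2)).
  assert (Rabs (s * cos (t/2)) <= 1/2) by (rewrite Rabs_mult; pose proof (Rabs_le_1_cos (t/2)); pose proof (Rabs_pos s);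
    pose proof (Rabs_pos (cos (t/2))); nra).
  revert H0. unfold Rabs; destruct Rcase_abs; lra.
Qed.

Lemma mob_inj N : (1 <= N)%nat -> forall u h u' h', Pin N u h -> Pin N u' h' -> Pmob N u h = Pmob N u' h' -> u = u' /\ h = h'.
Proof.
  intros HN u h u' h' [Hu Hh] [Hu' Hh'] E. unfold Pmob in E.
  set (t := ang N u) in *. set (t' := ang N u') in *. set (s := h - 1/2) in *. set (s' := h' - 1/2) in *.
  assert (Hs : Rabs s <= 1/2) by (apply abs_half; auto). assert (Hs' : Rabs s' <= 1/2) by (apply abs_half; auto).
  assert (E0 := f_equal (fun y => y 0%nat) E). assert (E1 := f_equal (fun y => y 1%nat) E).
  assert (E2 := f_equal (fun y => y 2%nat) E). simpl in E0, E1, E2. unfold Mob in E0, E1, E2.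
  pose proof (A_bounds s t Hs). pose proof (A_bounds s' t' Hs').
  set (A := 1 + s * cos (t / 2)) in *. set (A' := 1 + s' * cos (t' / 2)) in *.
  pose proof (sin2_cos2 t). pose proof (sin2_cos2 t'). unfold Rsqr in *.
  assert (EA : A = A').
  { assert (A * A = A' * A').
    { replace (A * A) with ((A * cos t) * (A * cos t) + (A * sin t) * (A * sin t)) by (transitivity (A * A * (sin t * sin t + cos t * cos t)); [ring| rewrite H1; ring]).
      rewrite E0, E1. transitivity (A' * A' * (sin t' * sin t' + cos t' * cos t')); [ring|rewrite H2; ring]. }
    nra. }
  rewrite <- EA in E0, E1.
  assert (Ec : cos t = cos t') by (apply Rmult_eq_reg_l with A; lra).
  assert (Es : sin t = sin t') by (apply Rmult_eq_reg_l with A; lra).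
  assert (C : cos (t - t') = 1) by (rewrite cos_minus, <- Ec, <- Es; lra).
  pose proof (ang_range N u HN Hu). pose proof (ang_range N u' HN Hu').
  apply cos_eq1 in C; [|fold t t' in H3, H4; lra].
  assert (Ett : t = t') by lra.
  assert (Euu : u = u').
  { unfold t, t' in C. rewrite ang_diff in C by auto. apply Rmult_integral in C. destruct C; [|lra].
    pose proof (kpos N HN). lra. }
  split; auto.
  unfold A, A' in EA. rewrite <- Ett in EA, E2.
  pose proof (sin2_cos2 (t/2)). unfold Rsqr in H5.
  assert (s = s').
  { replace s with (s * (sin (t/2) * sin (t/2) + cos (t/2) * cos (t/2))) by (rewrite H5; ring).
    replace s' with (s' * (sin (t/2) * sin (t/2) + cos (t/2) * cos (t/2))) by (rewrite H5; ring).
    assert (H6 : s * cos (t/2) = s' * cos (t/2)) by lra.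
    replace (s * (sin (t/2) * sin (t/2) + cos (t/2) * cos (t/2))) with ((s * sin (t/2)) * sin (t/2) + (s * cos (t/2)) * cos (t/2)) by ring.
    rewrite E2, H6. ring. }
  unfold s, s' in H6. lra.
Qed.

Lemma mob_s_close t1 s1 t2 s2 d : Rabs s1 <= 1/2 -> Rabs s2 <= 1/2 ->
  dist 3 (Mob t1 s1) (Mob t2 s2) < d -> Rabs (s1 - s2) < 3 * d + Rabs (t1 - t2) / 2.
Proof.
  intros Hs1 Hs2 Hd. destruct (dist3_coords _ _ _ Hd) as [C0 [C1 C2]].
  pose proof (mob_ident t1 s1 t2 s2) as I. cbv zeta in I.
  pose proof (A_bounds s1 t1 Hs1). pose proof (A_bounds s2 t2 Hs2).
  set (A1 := 1 + s1 * cos (t1 / 2)) in *. set (A2 := 1 + s2 * cos (t2 / 2)) in *.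
  pose proof (COS_bound (t1 - t2)).
  assert (Hd0 : 0 < d) by (pose proof (Rabs_pos (Mob t1 s1 2%nat - Mob t2 s2 2%nat)); lra).
  apply sq_lt in C0. apply sq_lt in C1.
  assert (HA : Rabs (A1 - A2) < 2 * d).
  { assert (P0 : 0 <= 2 * A1 * A2 * (1 - cos (t1 - t2))).
    { apply Rmult_le_pos; [|lra]. apply Rmult_le_pos; lra. }
    assert (Q : (A1 - A2) ^ 2 < (2 * d) ^ 2) by nra.
    destruct (Rle_lt_dec (2 * d) (Rabs (A1 - A2))) as [G|G]; auto. exfalso.
    rewrite <- (pow2_abs (A1 - A2)) in Q. nra. }
  unfold Mob in C2.
  pose proof (sin2_cos2 (t1/2)). pose proof (sin2_cos2 (t2/2)). unfold Rsqr in *.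
  assert (Hc2 : Rabs (cos (t1/2) - cos (t2/2)) <= Rabs (t1 - t2) / 2).
  { eapply Rle_trans; [apply cos_lip|]. replace (t1/2 - t2/2) with ((t1 - t2) * /2) by field.
    rewrite Rabs_mult, (Rabs_pos_eq (/2)) by lra. lra. }
  assert (Hs2' : Rabs (sin (t1/2) - sin (t2/2)) <= Rabs (t1 - t2) / 2).
  { eapply Rle_trans; [apply sin_lip|]. replace (t1/2 - t2/2) with ((t1 - t2) * /2) by field.
    rewrite Rabs_mult, (Rabs_pos_eq (/2)) by lra. lra. }
  replace (s1 - s2) with ((s1 * cos (t1/2) * cos (t1/2) - s2 * cos (t2/2) * cos (t2/2)) +
    (s1 * sin (t1/2) * sin (t1/2) - s2 * sin (t2/2) * sin (t2/2))).
  2:{ transitivity (s1 * (sin (t1/2) * sin (t1/2) + cos (t1/2) * cos (t1/2)) - s2 * (sin (t2/2) * sin (t2/2) + cos (t2/2) * cos (t2/2))); [ring|].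
      rewrite H2, H3. ring. }
  eapply Rle_lt_trans; [apply Rabs_triang|].
  assert (P2b : Rabs (s2 * cos (t2/2)) <= 1/2) by (rewrite Rabs_mult; pose proof (Rabs_le_1_cos (t2/2)); pose proof (Rabs_pos s2);
    pose proof (Rabs_pos (cos (t2/2))); nra).
  assert (Q2b : Rabs (s2 * sin (t2/2)) <= 1/2) by (rewrite Rabs_mult; pose proof (Rabs_le_1_sin (t2/2)); pose proof (Rabs_pos s2);
    pose proof (Rabs_pos (sin (t2/2))); nra).
  pose proof (prod_bound (s1 * cos (t1/2)) (cos (t1/2)) (s2 * cos (t2/2)) (cos (t2/2)) 1 (1/2) (Rabs_le_1_cos _) P2b).
  pose proof (prod_bound (s1 * sin (t1/2)) (sin (t1/2)) (s2 * sin (t2/2)) (sin (t2/2)) 1 (1/2) (Rabs_le_1_sin _) Q2b).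
  replace (s1 * cos (t1 / 2) - s2 * cos (t2 / 2)) with (A1 - A2) in H4 by (unfold A1, A2; ring).
  lra.
Qed.
Lemma u_of_t N t : (1 <= N)%nat -> 2 * PI / INR N < t <= 2 * PI + 2 * PI / INR N ->
  1 < t * INR N / (2 * PI) <= INR N + 1 /\ ang N (t * INR N / (2 * PI)) = t.
Proof.
  intros HN Ht. assert (Hk := kpos N HN). assert (HNp := INR_pos N HN). assert (HP := PI_RGT_0).
  split; [split|].
  + apply Rmult_lt_reg_l with (2 * PI / INR N); auto.
    replace (2 * PI / INR N * (t * INR N / (2 * PI))) with t by (field; lra). lra.
  + apply Rmult_le_reg_l with (2 * PI / INR N); auto.
    replace (2 * PI / INR N * (t * INR N / (2 * PI))) with t by (field; lra).
    replace (2 * PI / INR N * (INR N + 1)) with (2 * PI + 2 * PI / INR N) by (field; lra). lra.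
  + unfold ang; field; lra.
Qed.

Lemma mob_near N : (1 <= N)%nat -> Nat.odd N = true -> NearP N (Pmob N).
Proof.
  intros HN Ho eps Heps.
  assert (Hk := kpos N HN). assert (HP := PI_RGT_0).
  set (eta := Rmin PI (Rmin (2 * PI / INR N * eps) eps)).
  assert (Heta : 0 < eta <= PI) by (unfold eta; split; [apply Rmin_glb_lt; [lra|apply Rmin_glb_lt; nra]|apply Rmin_l]).
  assert (Heta2 : eta <= 2 * PI / INR N * eps) by (eapply Rle_trans; [apply Rmin_r|apply Rmin_l]).
  assert (Heta3 : eta <= eps) by (eapply Rle_trans; [apply Rmin_r|apply Rmin_r]).
  assert (Hc := cos_lt1 eta Heta).
  exists (Rmin (eps / 6) (Rmin 1 ((1 - cos eta) / 4))).
  split; [apply Rmin_glb_lt; [lra|apply Rmin_glb_lt; lra]|].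
  intros u h u' h' [Hu Hh] [Hu' Hh'] Hd.
  set (d := Rmin (eps / 6) (Rmin 1 ((1 - cos eta) / 4))) in *.
  assert (D1 : d <= eps / 6) by apply Rmin_l.
  assert (D2 : d <= 1) by (eapply Rle_trans; [apply Rmin_r|apply Rmin_l]).
  assert (D3 : d <= (1 - cos eta) / 4) by (eapply Rle_trans; [apply Rmin_r|apply Rmin_r]).
  unfold Pmob in Hd. set (t := ang N u) in *. set (t' := ang N u') in *.
  set (s := h - 1/2) in *. set (s' := h' - 1/2) in *.
  assert (Hs : Rabs s <= 1/2) by (apply abs_half; auto). assert (Hs' : Rabs s' <= 1/2) by (apply abs_half; auto).
  assert (Hd0 : 0 < d) by (pose proof (dist_ge0 3 (Mob t s) (Mob t' s')); lra).
  assert (Hcos : cos (t - t') > cos eta).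
  { destruct (dist3_coords _ _ _ Hd) as [C0 [C1 C2]].
    apply sq_lt in C0. apply sq_lt in C1.
    pose proof (mob_ident t s t' s') as I. cbv zeta in I.
    pose proof (A_bounds s t Hs). pose proof (A_bounds s' t' Hs').
    set (A := 1 + s * cos (t / 2)) in *. set (A' := 1 + s' * cos (t' / 2)) in *.
    pose proof (COS_bound (t - t')).
    assert (AA : A * A' >= 1/4) by nra.
    assert (B : (1 - cos (t - t')) / 2 <= 2 * A * A' * (1 - cos (t - t'))) by nra.
    assert (d ^ 2 <= d) by nra.
    assert (0 <= (A - A') ^ 2) by apply pow2_ge_0.
    lra. }
  pose proof (ang_range N u HN Hu). pose proof (ang_range N u' HN Hu'). fold t t' in H, H0.
  rewrite Ho; unfold flip.
  destruct (circle (t - t') eta ltac:(split; lra) Heta Hcos) as [G|[G|G]].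
  - left. split; [apply (ang_small N); [auto|fold t t'; lra]|].
    pose proof (mob_s_close t s t' s' d Hs Hs' Hd). unfold s, s' in H1.
    replace (h - h') with (h - 1/2 - (h' - 1/2)) by lra. lra.
  - right; left. split.
    + apply (ang_small N); [auto|]. rewrite ang_shift by auto. fold t t'.
      replace (t' + 2 * PI - t) with (-(t - t' - 2 * PI)) by ring. rewrite Rabs_Ropp. lra.
    + rewrite <- (mob_deck_raw t' s') in Hd.
      assert (Rabs (- s') <= 1/2) by (rewrite Rabs_Ropp; auto).
      pose proof (mob_s_close t s (t' + 2 * PI) (- s') d Hs H1 Hd).
      replace (t - (t' + 2 * PI)) with (t - t' - 2 * PI) in H2 by ring.
      replace (1 - h' - h) with (-(s - - s')) by (unfold s, s'; lra). rewrite Rabs_Ropp. lra.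
  - right; right. split.
    + apply (ang_small N); [auto|]. rewrite ang_shift by auto. fold t t'.
      replace (t + 2 * PI - t') with (t - t' + 2 * PI) by ring. lra.
    + rewrite <- (mob_deck_raw t s) in Hd.
      assert (Rabs (- s) <= 1/2) by (rewrite Rabs_Ropp; auto).
      pose proof (mob_s_close (t + 2 * PI) (- s) t' s' d H1 Hs' Hd).
      replace (t + 2 * PI - t') with (t - t' + 2 * PI) in H2 by ring.
      replace (1 - h - h') with (- s - s') by (unfold s, s'; lra). lra.
Qed.

Lemma mob_band_of t s : 0 <= t <= 2 * PI -> -(1/2) <= s <= 1/2 -> mobius_band (Mob t s).
Proof.
  intros Ht Hs. split; [intros [|[|[|i]]] Hi; auto; lia|].
  exists t, s. repeat split; try lra; reflexivity.
Qed.

Lemma mob_in N : (2 <= N)%nat -> forall u h, 0 <= u <= INR N + 2 -> 0 <= h <= 1 -> mobius_band (Pmob N u h).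
Proof.
  intros HN u h Hu Hh. assert (HN1 : (1 <= N)%nat) by lia.
  assert (Hk := kpos N HN1). assert (HNp := INR_pos N HN1). assert (HP := PI_RGT_0). assert (Hkl := k_lt N HN).
  unfold Pmob.
  assert (Ht : 0 <= ang N u <= 2 * PI + 2 * (2 * PI / INR N)).
  { replace (ang N u) with (2 * PI / INR N * u) by (unfold ang; field; lra).
    split; [apply Rmult_le_pos; lra|].
    replace (2 * PI + 2 * (2 * PI / INR N)) with (2 * PI / INR N * (INR N + 2)) by (field; lra).
    apply Rmult_le_compat_l; lra. }
  assert (Hkp : 2 * PI / INR N <= PI).
  { assert (2 <= INR N) by (replace 2 with (INR 2) by reflexivity; apply le_INR; auto).
    apply Rmult_le_reg_r with (INR N); [lra|]. unfold Rdiv. rewrite Rmult_assoc, Rinv_l by lra. nra. }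
  destruct (Rle_lt_dec (ang N u) (2 * PI)).
  - apply mob_band_of; split; lra.
  - replace (ang N u) with ((ang N u - 2 * PI) + 2 * PI) by ring.
    replace (h - 1/2) with (- (1/2 - h)) by lra. rewrite mob_deck_raw.
    apply mob_band_of; split; lra.
Qed.

Lemma mob_par N : (2 <= N)%nat -> forall y, mobius_band y -> exists u h, 1 < u <= INR N + 1 /\ 0 <= h <= 1 /\ y = Pmob N u h.
Proof.
  intros HN y [Hv [t [s [Ht [Hs [E0 [E1 E2]]]]]]]. assert (HN1 : (1 <= N)%nat) by lia.
  assert (Hk := kpos N HN1). assert (HNp := INR_pos N HN1). assert (HP := PI_RGT_0). assert (Hkl := k_lt N HN).
  assert (Hy : y = Mob t s).
  { apply functional_extensionality; intros [|[|[|i]]]; auto. apply Hv; lia. }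
  destruct (Rle_lt_dec t (2 * PI / INR N)).
  - destruct (u_of_t N (t + 2 * PI) HN1 ltac:(split; lra)) as [Hu Ha].
    exists ((t + 2 * PI) * INR N / (2 * PI)), (1/2 - s). split; auto. split; [lra|].
    unfold Pmob. rewrite Ha. replace (1/2 - s - 1/2) with (- s) by lra. rewrite mob_deck_raw. auto.
  - destruct (u_of_t N t HN1 ltac:(split; lra)) as [Hu Ha].
    exists (t * INR N / (2 * PI)), (s + 1/2). split; auto. split; [lra|].
    unfold Pmob. rewrite Ha. replace (s + 1/2 - 1/2) with s by lra. auto.
Qed.

Theorem zig_mob N : (5 <= N)%nat -> Nat.odd N = true -> homeomorphic N (Zig N) 3 mobius_band.
Proof.
  intros HN Ho. apply (zig_homeo N (Pmob N)); auto.
  - apply mob_deck; auto; lia.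
  - apply mob_lip; lia.
  - apply mob_inj; lia.
  - apply mob_near; auto; lia.
  - apply mob_in; lia.
  - apply mob_par; lia.
Qed.
Definition perm_pt (N : nat) (pi : nat -> nat) (x : Rpoint) : Rpoint :=
  fun i => if (i <? N)%nat then x (pi i) else 0.

Lemma perm_dist N pi x y : (forall i, (i < N)%nat -> (pi i < N)%nat) ->
  dist N (perm_pt N pi x) (perm_pt N pi y) <= dist N x y.
Proof.
  intros Hp. apply dist_le; [apply dist_ge0|]. intros i Hi. unfold perm_pt.
  destruct (Nat.ltb_spec i N); [|lia]. apply dist_coord; auto.
Qed.

Lemma homeo_perm N (A B : Rpoint -> Prop) pi sg :
  (forall i, (i < N)%nat -> (pi i < N)%nat) -> (forall i, (i < N)%nat -> (sg i < N)%nat) ->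
  (forall i, (i < N)%nat -> pi (sg i) = i) -> (forall i, (i < N)%nat -> sg (pi i) = i) ->
  (forall x, A x -> B (perm_pt N pi x)) -> (forall y, B y -> A (perm_pt N sg y)) ->
  (forall x, A x -> forall i, (N <= i)%nat -> x i = 0) -> (forall y, B y -> forall i, (N <= i)%nat -> y i = 0) ->
  homeomorphic N A N B.
Proof.
  intros H1 H2 H3 H4 HA HB VA VB.
  exists (perm_pt N pi), (perm_pt N sg). split; [|split; [|split; [|split; [|split]]]]; auto.
  - intros x Hx. apply functional_extensionality; intros i. unfold perm_pt.
    destruct (Nat.ltb_spec i N); [|symmetry; apply VA; auto].
    destruct (Nat.ltb_spec (sg i) N); [|specialize (H2 i H); lia]. rewrite H3; auto.
  - intros y Hy. apply functional_extensionality; intros i. unfold perm_pt.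
    destruct (Nat.ltb_spec i N); [|symmetry; apply VB; auto].
    destruct (Nat.ltb_spec (pi i) N); [|specialize (H1 i H); lia]. rewrite H4; auto.
  - intros x Hx eps He. exists eps. split; auto. intros y Hy Hd.
    eapply Rle_lt_trans; [apply perm_dist|]; auto.
  - intros x Hx eps He. exists eps. split; auto. intros y Hy Hd.
    eapply Rle_lt_trans; [apply perm_dist|]; auto.
Qed.

Lemma homeo_ext m (A A' : Rpoint -> Prop) p B : (forall x, A x <-> A' x) ->
  homeomorphic m A p B -> homeomorphic m A' p B.
Proof.
  intros E [f [g [H1 [H2 [H3 [H4 [H5 H6]]]]]]]. exists f, g.
  split; [|split; [|split; [|split; [|split]]]].
  - intros x Hx; apply H1, E; auto.
  - intros y Hy; apply E, H2; auto.
  - intros x Hx; apply H3, E; auto.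
  - auto.
  - intros x Hx eps He. destruct (H5 x (proj2 (E x) Hx) eps He) as [d [Hd Hd']].
    exists d; split; auto. intros y Hy; apply Hd', E; auto.
  - intros y Hy eps He. destruct (H6 y Hy eps He) as [d [Hd Hd']].
    exists d; split; auto.
Qed.

Definition RT (N d : nat) (x : Rpoint) : Prop :=
  (forall i, (N <= i)%nat -> x i = 0) /\ (forall i, 0 <= x i) /\ sumR N x = 1 /\
  exists a, (a < N)%nat /\ forall j, (j < N)%nat -> x j <> 0 -> j = a \/ j = (a + d) mod N \/ j = (a + 2 * d) mod N.

Lemma RT_Zig N d : (5 <= N)%nat -> Nat.gcd d N = 1%nat -> (0 < d)%nat ->
  homeomorphic N (RT N d) N (Zig N).
Proof.
  intros HN Hg Hd.
  destruct (Nat.gcd_bezout_pos d N Hd) as [e [b Hb]]. rewrite Hg in Hb.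
  set (pi := fun i => ((i * d) mod N)%nat). set (sg := fun j => ((j * e) mod N)%nat).
  assert (HN0 : (N <> 0)%nat) by lia.
  assert (Kde : forall i, ((i * d * e) mod N = i mod N)%nat).
  { intros i. replace (i * d * e)%nat with (i + (i * b) * N)%nat by nia. apply Nat.Div0.mod_add. }
  assert (Ped : forall i, (i < N)%nat -> pi (sg i) = i).
  { intros i Hi. unfold pi, sg. rewrite Nat.Div0.mul_mod_idemp_l.
    replace (i * e * d)%nat with (i * d * e)%nat by ring. rewrite Kde. apply Nat.mod_small; auto. }
  assert (Sgp : forall i, (i < N)%nat -> sg (pi i) = i).
  { intros i Hi. unfold pi, sg. rewrite Nat.Div0.mul_mod_idemp_l. rewrite Kde. apply Nat.mod_small; auto. }
  assert (PiL : forall i, (i < N)%nat -> (pi i < N)%nat) by (intros; unfold pi; apply mod_lt; lia).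
  assert (SgL : forall i, (i < N)%nat -> (sg i < N)%nat) by (intros; unfold sg; apply mod_lt; lia).
  assert (PiS : forall i r, pi ((i + r) mod N) = ((pi i) + r * d) mod N).
  { intros i r. unfold pi. rewrite Nat.Div0.mul_mod_idemp_l, Nat.Div0.add_mod_idemp_l. f_equal. ring. }
  assert (SgS : forall a r, sg ((a + r * d) mod N) = ((sg a) + r) mod N).
  { intros a r. unfold sg. rewrite Nat.Div0.mul_mod_idemp_l, Nat.Div0.add_mod_idemp_l.
    replace ((a + r * d) * e)%nat with (a * e + r + (r * b) * N)%nat by nia.
    rewrite Nat.Div0.mod_add. reflexivity. }
  assert (Pinj : forall i j, (i < N)%nat -> (j < N)%nat -> pi i = pi j -> i = j).
  { intros i j Hi Hj E. rewrite <- (Sgp i Hi), <- (Sgp j Hj), E. reflexivity. }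
  apply (homeo_perm N _ _ pi sg); auto.
  -
    intros x (Hv & Hp & Hs & a & Ha & Hx).
    set (i := sg a). assert (Hi : (i < N)%nat) by (apply SgL; auto).
    assert (Pa : pi i = a) by (apply Ped; auto).
    assert (P1 : pi ((i + 1) mod N) = (a + d) mod N) by (rewrite PiS, Pa; f_equal; lia).
    assert (P2 : pi ((i + 2) mod N) = (a + 2 * d) mod N) by (rewrite PiS, Pa; reflexivity).
    destruct (tri_distinct N i ltac:(lia)) as [D1 [D2 D3]]. rewrite (Nat.mod_small i N Hi) in D1, D2.
    assert (M1 := mod_lt N (i+1) ltac:(lia)). assert (M2 := mod_lt N (i+2) ltac:(lia)).
    assert (Tr : inTri N i (perm_pt N pi x)).
    { intros j Hj Hnz. unfold perm_pt in Hnz. destruct (Nat.ltb_spec j N); [|lia].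
      rewrite (Nat.mod_small i N Hi).
      destruct (Hx (pi j) (PiL j Hj) Hnz) as [E|[E|E]].
      - left. apply Pinj; auto. congruence.
      - right; left. apply Pinj; auto. congruence.
      - right; right. apply Pinj; auto. congruence. }
    split; [|split; [|split]].
    + intros j Hj. unfold perm_pt. destruct (Nat.ltb_spec j N); [lia|auto].
    + intros j. unfold perm_pt. destruct (j <? N)%nat; [auto|lra].
    + rewrite (sumR_sparse N _ i ((i+1) mod N) ((i+2) mod N)); auto.
      2:{ intros j Hj Hnz. destruct (Tr j Hj Hnz) as [E|[E|E]]; [left; rewrite E; apply Nat.mod_small|right; left|right; right]; auto. }
      unfold perm_pt. repeat match goal with |- context [Nat.ltb ?x ?y] => destruct (Nat.ltb_spec x y); try lia end.
      rewrite Pa, P1, P2. rewrite <- Hs. symmetry.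
      apply sumR_sparse; auto; try (apply mod_lt; lia).
      * intro E. apply D1. apply Pinj; auto. congruence.
      * intro E. apply D2. apply Pinj; auto. congruence.
      * intro E. apply D3. apply Pinj; auto. congruence.
    + exists i. split; auto.
  -
    intros y (Hv & Hp & Hs & i & Hi & Hy).
    set (a := pi i). assert (Ha : (a < N)%nat) by (apply PiL; auto).
    assert (S0 : sg a = i) by (apply Sgp; auto).
    assert (S1 : sg ((a + d) mod N) = (i + 1) mod N) by (replace (a + d)%nat with (a + 1 * d)%nat by lia; rewrite SgS, S0; reflexivity).
    assert (S2 : sg ((a + 2 * d) mod N) = (i + 2) mod N) by (rewrite SgS, S0; reflexivity).
    assert (Sinj : forall u v, (u < N)%nat -> (v < N)%nat -> sg u = sg v -> u = v).
    { intros u v Hu Hv' E. rewrite <- (Ped u Hu), <- (Ped v Hv'), E. reflexivity. }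
    destruct (tri_distinct N i ltac:(lia)) as [D1 [D2 D3]]. rewrite (Nat.mod_small i N Hi) in D1, D2.
    assert (M1 := mod_lt N (a+d) ltac:(lia)). assert (M2 := mod_lt N (a+2*d) ltac:(lia)).
    assert (Tr : forall j, (j < N)%nat -> perm_pt N sg y j <> 0 -> j = a \/ j = (a + d) mod N \/ j = (a + 2 * d) mod N).
    { intros j Hj Hnz. unfold perm_pt in Hnz. destruct (Nat.ltb_spec j N); [|lia].
      destruct (Hy (sg j) (SgL j Hj) Hnz) as [E|[E|E]]; rewrite ?(Nat.mod_small i N Hi) in E.
      - left. apply Sinj; auto. congruence.
      - right; left. apply Sinj; auto. congruence.
      - right; right. apply Sinj; auto. congruence. }
    split; [|split; [|split]].
    + intros j Hj. unfold perm_pt. destruct (Nat.ltb_spec j N); [lia|auto].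
    + intros j. unfold perm_pt. destruct (j <? N)%nat; [auto|lra].
    + assert (Dst : (a <> (a + d) mod N /\ a <> (a + 2 * d) mod N /\ (a + d) mod N <> (a + 2 * d) mod N)%nat).
      { repeat split; intro E.
        - apply D1. rewrite <- S1, <- E. symmetry; exact S0.
        - apply D2. rewrite <- S2, <- E. symmetry; exact S0.
        - apply D3. rewrite <- S1, <- S2, E. reflexivity. }
      destruct Dst as [E1 [E2 E3]].
      rewrite (sumR_sparse N _ a ((a+d) mod N) ((a+2*d) mod N)); auto.
      unfold perm_pt. repeat match goal with |- context [Nat.ltb ?x ?y] => destruct (Nat.ltb_spec x y); try lia end.
      rewrite S0, S1, S2.
      rewrite <- (Nat.mod_small i N Hi) at 1.
      apply tri_sum; [lia|auto|auto].
    + exists a. split; auto.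
  - intros x (Hv & _). auto.
  - intros y (Hv & _). auto.
Qed.
Lemma real_a n k x : (0 < n)%nat -> (0 < k)%nat ->
  (realization n n (n + k) x <-> RT (3 * n + k) n x).
Proof.
  intros Hn Hk. unfold realization, in_simplex, RT. cbv zeta.
  replace (n + n + (n + k))%nat with (3 * n + k)%nat by lia. set (N := (3 * n + k)%nat).
  assert (HN0 : (0 < N)%nat) by (unfold N; lia).
  assert (Hk0 : forall k0, (k0 < N)%nat -> ((k0 + N) mod N = k0)%nat) by (intros; rewrite mod_addN; apply Nat.mod_small; auto).
  split; intros (Hv & Hp & Hs & Hsimp); split; auto; split; auto; split; auto.
  - destruct Hsimp as [k0 [Hk0N Hc]].
    destruct Hc as [C|[C|[C|[C|C]]]].
    + exists k0. split; auto. intros j Hj Hx. replace (k0 + 2 * n)%nat with (k0 + n + n)%nat by lia. auto.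
    + exists ((k0 + N - n - n) mod N)%nat. split; [apply mod_lt; auto|].
      intros j Hj Hx. destruct (C j (conj Hj Hx)) as [E|[E|E]].
      * right; right. rewrite mod_plus_l. replace (k0 + N - n - n + 2 * n)%nat with (k0 + N)%nat by (unfold N in *; lia).
        rewrite Hk0; auto.
      * right; left. rewrite mod_plus_l. rewrite E. f_equal. unfold N in *; lia.
      * left; auto.
    + exists k0. split; auto. intros j Hj Hx. destruct (C j (conj Hj Hx)) as [E|E]; auto.
    + exists k0. split; auto. intros j Hj Hx. destruct (C j (conj Hj Hx)) as [E|E]; auto.
    + exists ((k0 + (n + k)) mod N)%nat. split; [apply mod_lt; auto|].
      intros j Hj Hx. destruct (C j (conj Hj Hx)) as [E|E].
      * right; right. rewrite mod_plus_l. replace (k0 + (n + k) + 2 * n)%nat with (k0 + N)%nat by (unfold N in *; lia).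
        rewrite Hk0; auto.
      * left; auto.
  - destruct Hsimp as [a [Ha Hc]]. exists a. split; auto. left.
    intros j [Hj Hx]. replace (a + n + n)%nat with (a + 2 * n)%nat by lia. auto.
Qed.

Lemma real_b n k x : (0 < n)%nat -> (0 < k)%nat ->
  (realization n (n + k) (n + k) x <-> RT (3 * n + 2 * k) (n + k) x).
Proof.
  intros Hn Hk. unfold realization, in_simplex, RT. cbv zeta.
  replace (n + (n + k) + (n + k))%nat with (3 * n + 2 * k)%nat by lia. set (N := (3 * n + 2 * k)%nat).
  assert (HN0 : (0 < N)%nat) by (unfold N; lia).
  assert (Hk0 : forall k0, (k0 < N)%nat -> ((k0 + N) mod N = k0)%nat) by (intros; rewrite mod_addN; apply Nat.mod_small; auto).
  split; intros (Hv & Hp & Hs & Hsimp); split; auto; split; auto; split; auto.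
  - destruct Hsimp as [k0 [Hk0N Hc]].
    destruct Hc as [C|[C|[C|[C|C]]]].
    + exists ((k0 + n) mod N)%nat. split; [apply mod_lt; auto|].
      intros j Hj Hx. destruct (C j (conj Hj Hx)) as [E|[E|E]].
      * right; right. rewrite mod_plus_l. replace (k0 + n + 2 * (n + k))%nat with (k0 + N)%nat by (unfold N in *; lia).
        rewrite Hk0; auto.
      * left; auto.
      * right; left. rewrite mod_plus_l. auto.
    + exists k0. split; auto. intros j Hj Hx. destruct (C j (conj Hj Hx)) as [E|[E|E]].
      * left; auto.
      * right; right. rewrite E. f_equal. unfold N in *; lia.
      * right; left. rewrite E. f_equal. unfold N in *; lia.
    + exists ((k0 + n) mod N)%nat. split; [apply mod_lt; auto|].
      intros j Hj Hx. destruct (C j (conj Hj Hx)) as [E|E].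
      * right; right. rewrite mod_plus_l. replace (k0 + n + 2 * (n + k))%nat with (k0 + N)%nat by (unfold N in *; lia).
        rewrite Hk0; auto.
      * left; auto.
    + exists k0. split; auto. intros j Hj Hx. destruct (C j (conj Hj Hx)) as [E|E]; auto.
    + exists k0. split; auto. intros j Hj Hx. destruct (C j (conj Hj Hx)) as [E|E]; auto.
  - destruct Hsimp as [a [Ha Hc]]. exists a. split; auto. right; left.
    intros j [Hj Hx]. destruct (Hc j Hj Hx) as [E|[E|E]].
    + left; auto.
    + right; right. rewrite E. f_equal. unfold N in *; lia.
    + right; left. rewrite E. f_equal. unfold N in *; lia.
Qed.

Lemma even_odd_false N : Nat.Even N -> Nat.odd N = false.
Proof. intros H. apply Nat.even_spec in H. rewrite <- Nat.negb_even, H. reflexivity. Qed.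

Lemma odd_odd_true N : Nat.Odd N -> Nat.odd N = true.
Proof. intros H. apply Nat.odd_spec in H. auto. Qed.

Lemma gcd_a n k : Nat.gcd n k = 1%nat -> Nat.gcd n (3 * n + k) = 1%nat.
Proof. intros H. replace (3 * n + k)%nat with (k + 3 * n)%nat by lia. rewrite Nat.gcd_add_mult_diag_r. auto. Qed.

Lemma gcd_b n k : Nat.gcd n k = 1%nat -> Nat.gcd (n + k) (3 * n + 2 * k) = 1%nat.
Proof.
  intros H. replace (3 * n + 2 * k)%nat with (n + 2 * (n + k))%nat by lia.
  rewrite Nat.gcd_add_mult_diag_r. rewrite Nat.gcd_comm.
  replace (n + k)%nat with (k + 1 * n)%nat by lia. rewrite Nat.gcd_add_mult_diag_r. auto.
Qed.

Theorem theorem6p10 (n k : nat) (hn : (0 < n)%nat) (hk : (0 < k)%nat)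
  (hgcd : Nat.gcd n k = 1%nat) :
  ( let N := (3 * n + k)%nat in
    (2 * (n + k) <> N)%nat ->
    (Nat.Even N -> homeomorphic N (realization n n (n + k)) 3 cylinder) /\
    (Nat.Odd N -> homeomorphic N (realization n n (n + k)) 3 mobius_band) ) /\
  ( let N := (3 * n + 2 * k)%nat in
    (Nat.Even N -> homeomorphic N (realization n (n + k) (n + k)) 3 cylinder) /\
    (Nat.Odd N -> homeomorphic N (realization n (n + k) (n + k)) 3 mobius_band) ).
Proof.
  split.
  - intros N Hne. assert (HN : (5 <= N)%nat) by (unfold N in *; lia).
    assert (HR : forall x, RT N n x <-> realization n n (n + k) x) by (intro x; symmetry; apply real_a; auto).
    assert (HT := RT_Zig N n HN (gcd_a n k hgcd) hn).
    split; intros HE; apply (homeo_ext N (RT N n)); auto; eapply homeo_trans; eauto.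
    + apply zig_cyl; auto. apply even_odd_false; auto.
    + apply zig_mob; auto. apply odd_odd_true; auto.
  - intros N. assert (HN : (5 <= N)%nat) by (unfold N in *; lia).
    assert (HR : forall x, RT N (n + k) x <-> realization n (n + k) (n + k) x) by (intro x; symmetry; apply real_b; auto).
    assert (HT := RT_Zig N (n + k) HN (gcd_b n k hgcd) ltac:(lia)).
    split; intros HE; apply (homeo_ext N (RT N (n + k))); auto; eapply homeo_trans; eauto.
    + apply zig_cyl; auto. apply even_odd_false; auto.
    + apply zig_mob; auto. apply odd_odd_true; auto.
Qed.
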